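(* Let $X_1,X_2$ be complex Banach spaces, $\mathcal{A}_1\subseteq\mathcal{B}(X_1)$, $\mathcal{A}_2\subseteq\mathcal{B}(X_2)$ standard operator algebras, $r,s$ nonnegative integers with $r+s\geq1$, and $\Phi:\mathcal{A}_1\to\mathcal{A}_2$ a map whose range contains every operator in $\mathcal{B}(X_2)$ of rank at most two, satisfying $\sigma_\pi(B^rAB^s)=\sigma_\pi(\Phi(B)^r\Phi(A)\Phi(B)^s)$ for all $A,B\in\mathcal{A}_1$. Then: $\Phi(A)=0$ if and only if $A=0$; $\Phi$ is linear and injective; and for every $A\in\mathcal{A}_1$, $A$ has rank one if and only if $\Phi(A)$ has rank one.
   Context: A standard operator algebra on a complex Banach space $X$ is a subalgebra of $\mathcal{B}(X)$ containing all finite rank operators; it need not be closed or unital. The peripheral spectrum of $T$ is $\sigma_\pi(T)=\{z\in\sigma(T):|z|=r(T)\}$, where $r(T)$ is the spectral radius. *)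

(* Defs.v *)
From Stdlib Require Import Reals Lra.
Open Scope R_scope.

Definition C := (R * R)%type.
Definition C0 : C := (0, 0).
Definition C1 : C := (1, 0).
Definition Cplus (a b : C) : C := (fst a + fst b, snd a + snd b).
Definition Cmult (a b : C) : C :=
  (fst a * fst b - snd a * snd b, fst a * snd b + snd a * fst b).
Definition Cmod (a : C) : R := sqrt (fst a ^ 2 + snd a ^ 2).

Record CBanach := {
  car :> Type;
  vzero : car;
  vadd : car -> car -> car;
  vopp : car -> car;
  vscal : C -> car -> car;
  vnorm : car -> R;
  vadd_assoc : forall x y z, vadd x (vadd y z) = vadd (vadd x y) z;
  vadd_comm : forall x y, vadd x y = vadd y x;
  vadd_zero : forall x, vadd x vzero = x;
  vadd_opp : forall x, vadd x (vopp x) = vzero;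
  vscal_one : forall x, vscal C1 x = x;
  vscal_assoc : forall a b x, vscal a (vscal b x) = vscal (Cmult a b) x;
  vscal_distr_v : forall a x y, vscal a (vadd x y) = vadd (vscal a x) (vscal a y);
  vscal_distr_s : forall a b x, vscal (Cplus a b) x = vadd (vscal a x) (vscal b x);
  vnorm_zero : forall x, vnorm x = 0 -> x = vzero;
  vnorm_triangle : forall x y, vnorm (vadd x y) <= vnorm x + vnorm y;
  vnorm_scal : forall a x, vnorm (vscal a x) = Cmod a * vnorm x;
  vcomplete : forall u : nat -> car,
    (forall eps, 0 < eps -> exists N, forall m n, (N <= m)%nat -> (N <= n)%nat ->
        vnorm (vadd (u m) (vopp (u n))) < eps) ->
    exists l, forall eps, 0 < eps -> exists N, forall n, (N <= n)%nat ->
        vnorm (vadd (u n) (vopp l)) < eps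
}.

Arguments vzero {c}.
Arguments vadd {c}.
Arguments vopp {c}.
Arguments vscal {c}.
Arguments vnorm {c}.

Section Ops.
Variable X : CBanach.

Definition op := X -> X.

Definition is_linear (T : op) : Prop :=
  (forall x y, T (vadd x y) = vadd (T x) (T y)) /\
  (forall a x, T (vscal a x) = vscal a (T x)).

Definition is_bounded (T : op) : Prop :=
  exists M : R, forall x, vnorm (T x) <= M * vnorm x.

Definition in_BX (T : op) : Prop := is_linear T /\ is_bounded T.

Definition op_zero : op := fun _ => vzero.
Definition op_id : op := fun x => x.
Definition op_add (S T : op) : op := fun x => vadd (S x) (T x).
Definition op_scal (a : C) (T : op) : op := fun x => vscal a (T x).
Definition op_comp (S T : op) : op := fun x => S (T x).
Definition op_pow (T : op) (n : nat) : op := fun x => Nat.iter n T x.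

Fixpoint vsum (f : nat -> X) (n : nat) : X :=
  match n with O => vzero | S k => vadd (vsum f k) (f k) end.

Definition rank_le (T : op) (k : nat) : Prop :=
  exists v : nat -> X, forall x, exists c : nat -> C,
    T x = vsum (fun i => vscal (c i) (v i)) k.

Definition finite_rank (T : op) : Prop := exists k, rank_le T k.

Definition rank_one (T : op) : Prop := rank_le T 1 /\ T <> op_zero.

Definition standard_op_alg (A : op -> Prop) : Prop :=
  (forall T, A T -> in_BX T) /\
  (forall T, in_BX T -> finite_rank T -> A T) /\
  (forall S T, A S -> A T -> A (op_add S T)) /\
  (forall a T, A T -> A (op_scal a T)) /\
  (forall S T, A S -> A T -> A (op_comp S T)).

Definition spectrum (T : op) (z : C) : Prop :=
  ~ exists S : op, in_BX S /\
      (forall x, S (vadd (vscal z x) (vopp (T x))) = x) /\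
      (forall x, vadd (vscal z (S x)) (vopp (T (S x))) = x).

Definition is_spectral_radius (T : op) (r : R) : Prop :=
  is_lub (fun t => exists w, spectrum T w /\ t = Cmod w) r.

Definition periph_spectrum (T : op) (z : C) : Prop :=
  spectrum T z /\ is_spectral_radius T (Cmod z).

End Ops.

Arguments op_zero {X}.
Arguments op_add {X}.
Arguments op_scal {X}.
Arguments op_comp {X}.
Arguments op_pow {X}.
Arguments rank_le {X}.
Arguments rank_one {X}.
Arguments in_BX {X}.
Arguments standard_op_alg {X}.
Arguments periph_spectrum {X}.

Definition sandwich {X : CBanach} (r s : nat) (B A : op X) : op X :=
  op_comp (op_pow B r) (op_comp A (op_pow B s)).

(* Main.v *)
Require Import Defs.
From Stdlib Require Import Reals Lra Lia List Classical ClassicalEpsilon FunctionalExtensionality Arith.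
From Coquelicot Require Import Complex.
From mathcomp Require classical_sets.

Lemma C_ext (a b : Complex.C) : fst a = fst b -> snd a = snd b -> a = b.
Proof. destruct a, b; simpl; intros; subst; reflexivity. Qed.

Lemma cis_pow (a : R) (n : nat) :
  Cpow (cos a, sin a) n = (cos (INR n * a), sin (INR n * a)).
Proof.
  induction n as [|n IH].
  - simpl. apply C_ext; simpl; rewrite Rmult_0_l; [rewrite cos_0|rewrite sin_0]; reflexivity.
  - simpl Cpow. rewrite IH. rewrite S_INR.
    replace ((INR n + 1) * a)%R with (a + INR n * a)%R by ring.
    apply C_ext; simpl; [rewrite cos_plus | rewrite sin_plus]; ring.
Qed.

Lemma exp_pow_INR (x : R) (n : nat) : (exp x ^ n = exp (INR n * x))%R.
Proof.
  induction n as [|n IH]; simpl.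
  - rewrite Rmult_0_l, exp_0; reflexivity.
  - rewrite IH. rewrite <- exp_plus. f_equal. destruct n; simpl; ring.
Qed.

Lemma polar (w : Complex.C) : w <> RtoC 0 ->
  exists t, w = (Cmod w * cos t, Cmod w * sin t)%R.
Proof.
  intros Hw. destruct w as [a b].
  pose proof (proj1 (Cmod_gt_0 (a,b)) Hw) as Hr.
  set (r := Cmod (a,b)) in *.
  assert (Hr2 : (r * r = a * a + b * b)%R).
  { unfold r, Cmod; simpl. rewrite sqrt_sqrt; [ring|nra]. }
  assert (Hx : (-1 <= a / r <= 1)%R).
  { split.
    - apply (Rmult_le_reg_r r); [lra|]. unfold Rdiv; rewrite Rmult_assoc, Rinv_l; [|lra].
      nra.
    - apply (Rmult_le_reg_r r); [lra|]. unfold Rdiv; rewrite Rmult_assoc, Rinv_l; [|lra].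
      nra. }
  assert (Hs : sqrt (1 - (a/r)²) = (Rabs b / r)%R).
  { assert (E : (1 - (a/r)² = (Rabs b / r) * (Rabs b / r))%R).
    { assert (Hab : (Rabs b * Rabs b = b * b)%R).
      { rewrite <- Rabs_mult. apply Rabs_right. nra. }
      unfold Rsqr. replace (Rabs b / r * (Rabs b / r))%R with ((Rabs b * Rabs b) / (r*r))%R by (field; lra).
      rewrite Hab. replace (b*b)%R with (r*r - a*a)%R by lra. field. lra. }
    rewrite E. apply sqrt_square. apply Rmult_le_pos; [apply Rabs_pos|].
    left; apply Rinv_0_lt_compat; lra. }
  destruct (Rle_dec 0 b) as [Hb|Hb].
  - exists (acos (a/r)). rewrite cos_acos, sin_acos by exact Hx. rewrite Hs.
    rewrite Rabs_right by lra. apply C_ext; simpl; field; lra.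
  - exists (- acos (a/r))%R. rewrite cos_neg, sin_neg, cos_acos, sin_acos by exact Hx. rewrite Hs.
    rewrite Rabs_left by lra. apply C_ext; simpl; field; lra.
Qed.

Lemma croot (n : nat) (w : Complex.C) : (1 <= n)%nat -> exists u, Cpow u n = w.
Proof.
  intros Hn. destruct (Ceq_dec w (RtoC 0)) as [H0|H0].
  - subst. exists (RtoC 0). destruct n; [lia|]. simpl. ring.
  - destruct (polar w H0) as [t Ht].
    pose proof (proj1 (Cmod_gt_0 w) H0) as Hr.
    set (rho := exp (ln (Cmod w) / INR n)).
    assert (HnR : (0 < INR n)%R) by (apply lt_0_INR; lia).
    assert (Hrho : (rho ^ n = Cmod w)%R).
    { unfold rho. rewrite exp_pow_INR. replace (INR n * (ln (Cmod w) / INR n))%R with (ln (Cmod w)) by (field; lra).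
      apply exp_ln; lra. }
    exists (RtoC rho * (cos (t / INR n), sin (t / INR n)))%C.
    rewrite Cpow_mult_l, cis_pow, <- RtoC_pow, Hrho.
    replace (INR n * (t / INR n))%R with t by (field; lra).
    remember (Cmod w) as m. rewrite Ht. apply C_ext; simpl; ring.
Qed.

Open Scope C_scope.

Section Vec.
Variable X : CBanach.

Lemma vscal_assoc' (a b : C) (x : X) : vscal a (vscal b x) = vscal (a * b) x.
Proof. apply vscal_assoc. Qed.
Lemma vscal_distr_s' (a b : C) (x : X) : vscal (a + b) x = vadd (vscal a x) (vscal b x).
Proof. apply vscal_distr_s. Qed.
Lemma vscal_one' (x : X) : vscal (RtoC 1) x = x.
Proof. apply vscal_one. Qed.

Lemma vadd_cancel (x y z : X) : vadd x y = vadd x z -> y = z.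
Proof.
  intros H.
  assert (E : forall w : X, w = vadd (vadd x w) (vopp x)).
  { intros w. rewrite (vadd_comm _ x w), <- vadd_assoc, vadd_opp, vadd_zero. reflexivity. }
  rewrite (E y), (E z), H. reflexivity.
Qed.

Lemma vadd_zero_l (x : X) : vadd vzero x = x.
Proof. rewrite vadd_comm; apply vadd_zero. Qed.

Lemma vscal_0 (x : X) : vscal (RtoC 0) x = vzero.
Proof.
  apply (vadd_cancel (vscal (RtoC 0) x)). rewrite vadd_zero, <- vscal_distr_s'.
  f_equal. ring.
Qed.

Lemma vscal_zero (a : C) : vscal a (@vzero X) = vzero.
Proof. rewrite <- (vscal_0 vzero), vscal_assoc'. f_equal. ring. Qed.

Lemma vopp_scal (x : X) : vopp x = vscal (RtoC (-1)) x.
Proof.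
  apply (vadd_cancel x). rewrite vadd_opp. rewrite <- (vscal_one' x) at 1.
  rewrite <- vscal_distr_s'. rewrite <- (vscal_0 x). f_equal. apply C_ext; simpl; ring.
Qed.

Inductive vexpr : Type :=
| EAtom : nat -> vexpr
| EAdd : vexpr -> vexpr -> vexpr
| EScal : C -> vexpr -> vexpr
| EOpp : vexpr -> vexpr
| EZero : vexpr.

Fixpoint veval (env : list X) (e : vexpr) : X :=
  match e with
  | EAtom n => nth n env vzero
  | EAdd a b => vadd (veval env a) (veval env b)
  | EScal c a => vscal c (veval env a)
  | EOpp a => vopp (veval env a)
  | EZero => vzero
  end.

Fixpoint vcoef (i : nat) (e : vexpr) : C :=
  match e with
  | EAtom n => if Nat.eqb i n then RtoC 1 else RtoC 0
  | EAdd a b => vcoef i a + vcoef i b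
  | EScal c a => c * vcoef i a
  | EOpp a => - vcoef i a
  | EZero => RtoC 0
  end.

Fixpoint lcomb (env : list X) (f : nat -> C) : X :=
  match env with
  | nil => vzero
  | v :: env' => vadd (vscal (f 0%nat) v) (lcomb env' (fun i => f (S i)))
  end.

Lemma lcomb_add env : forall f g, lcomb env (fun i => f i + g i) = vadd (lcomb env f) (lcomb env g).
Proof.
  induction env as [|v env IH]; intros f g; simpl.
  - rewrite vadd_zero; reflexivity.
  - rewrite IH, vscal_distr_s'. rewrite !vadd_assoc. f_equal.
    rewrite <- !vadd_assoc. f_equal. apply vadd_comm.
Qed.

Lemma lcomb_scal env : forall c f, lcomb env (fun i => c * f i) = vscal c (lcomb env f).
Proof.
  induction env as [|v env IH]; intros c f; simpl.
  - rewrite vscal_zero; reflexivity.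
  - rewrite IH, vscal_distr_v, vscal_assoc'. reflexivity.
Qed.

Lemma lcomb_zero env : lcomb env (fun _ => RtoC 0) = vzero.
Proof.
  induction env as [|v env IH]; simpl; [reflexivity|].
  rewrite IH, vscal_0, vadd_zero. reflexivity.
Qed.

Lemma lcomb_ext env : forall f g, (forall i, (i < length env)%nat -> f i = g i) -> lcomb env f = lcomb env g.
Proof.
  induction env as [|v env IH]; intros f g H; simpl; [reflexivity|].
  rewrite (H 0%nat) by (simpl; lia). f_equal. apply IH. intros i Hi. apply H. simpl; lia.
Qed.

Lemma lcomb_atom env : forall n, lcomb env (fun i => if Nat.eqb i n then RtoC 1 else RtoC 0) = nth n env vzero.
Proof.
  induction env as [|v env IH]; intros n; simpl.
  - destruct n; reflexivity.
  - destruct n as [|n]; simpl.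
    + rewrite vscal_one'. transitivity (vadd v (lcomb env (fun _ => RtoC 0))).
      * first [reflexivity | f_equal; apply lcomb_ext; intros i _; destruct i; reflexivity].
      * rewrite lcomb_zero, vadd_zero. reflexivity.
    + rewrite vscal_0, vadd_zero_l. apply IH.
Qed.

Lemma veval_lcomb env e : veval env e = lcomb env (fun i => vcoef i e).
Proof.
  induction e; simpl.
  - symmetry; apply lcomb_atom.
  - rewrite lcomb_add, IHe1, IHe2. reflexivity.
  - rewrite lcomb_scal, IHe. reflexivity.
  - rewrite vopp_scal, IHe, <- lcomb_scal. apply lcomb_ext. intros; apply C_ext; simpl; ring.
  - symmetry; apply lcomb_zero.
Qed.

Lemma vring_sound env e1 e2 :
  (forall i, (i < length env)%nat -> vcoef i e1 = vcoef i e2) -> veval env e1 = veval env e2.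
Proof. intros H. rewrite !veval_lcomb. apply lcomb_ext. exact H. Qed.

End Vec.

Ltac vin x l :=
  match l with
  | nil => constr:(false)
  | cons x _ => constr:(true)
  | cons _ ?l' => vin x l'
  end.

Ltac vcollect t l :=
  match t with
  | @vadd _ ?a ?b => let l1 := vcollect a l in vcollect b l1
  | @vopp _ ?a => vcollect a l
  | @vscal _ _ ?a => vcollect a l
  | @vzero _ => l
  | _ => let b := vin t l in
         match b with
         | true => l
         | false => eval cbv [app] in (app l (cons t nil))
         end
  end.

Ltac vlookup x l :=
  match l with
  | cons x _ => constr:(0%nat)
  | cons _ ?l' => let n := vlookup x l' in constr:(S n)
  end.

Ltac vreify t l :=
  match t with
  | @vadd ?X ?a ?b => let ea := vreify a l in let eb := vreify b l in constr:(EAdd ea eb)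
  | @vopp ?X ?a => let ea := vreify a l in constr:(EOpp ea)
  | @vscal ?X ?c ?a => let ea := vreify a l in constr:(EScal c ea)
  | @vzero ?X => constr:(EZero)
  | _ => let n := vlookup t l in constr:(EAtom n)
  end.

Ltac vring_prep :=
  match goal with
  | |- @eq (car ?X) ?lhs ?rhs =>
      let l0 := vcollect lhs (@nil (car X)) in
      let l := vcollect rhs l0 in
      let e1 := vreify lhs l in
      let e2 := vreify rhs l in
      change (veval X l e1 = veval X l e2);
      apply vring_sound;
      let i := fresh "i" in let Hi := fresh "Hi" in
      intros i Hi; simpl in Hi;
      repeat (destruct i as [|i]; [simpl vcoef| try (exfalso; lia)])
  end.

Ltac vring := vring_prep; try (unfold Defs.Cmult, Defs.Cplus; ring); try (apply C_ext; simpl; ring).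


Open Scope C_scope.

Section Ops.
Variable X : CBanach.

Lemma vnorm_scal' (a : C) (x : X) : vnorm (vscal a x) = (Cmod a * vnorm x)%R.
Proof. exact (vnorm_scal _ a x). Qed.

Lemma Rabs_m1 : Rabs (-1) = 1%R.
Proof. unfold Rabs; destruct Rcase_abs; lra. Qed.

Lemma vnorm_vzero : vnorm (@vzero X) = 0%R.
Proof. rewrite <- (vscal_0 X vzero), vnorm_scal'. rewrite Cmod_0. ring. Qed.

Lemma vnorm_pos (x : X) : (0 <= vnorm x)%R.
Proof.
  pose proof (vnorm_triangle _ x (vopp x)) as H. rewrite vadd_opp, vnorm_vzero in H.
  rewrite vopp_scal, vnorm_scal' in H. rewrite Cmod_R in H.
  rewrite Rabs_m1 in H. lra.
Qed.

Lemma vnorm_opp (x : X) : vnorm (vopp x) = vnorm x.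
Proof. rewrite vopp_scal, vnorm_scal', Cmod_R, Rabs_m1. ring. Qed.

Definition is_func (f : X -> C) : Prop :=
  (forall x y, f (vadd x y) = f x + f y) /\ (forall a x, f (vscal a x) = a * f x) /\
  exists M, forall x, (Cmod (f x) <= M * vnorm x)%R.

Lemma func_zero f : is_func f -> f vzero = RtoC 0.
Proof. intros [_ [H _]]. rewrite <- (vscal_0 X vzero), H. ring. Qed.

Lemma func_opp f x : is_func f -> f (vopp x) = - f x.
Proof. intros Hf. rewrite vopp_scal. destruct Hf as [_ [H _]]. rewrite H. apply C_ext; simpl; ring. Qed.

Lemma func_add f g : is_func f -> is_func g -> is_func (fun x => f x + g x).
Proof.
  intros [fa [fs [M HM]]] [ga [gs [N HN]]]. split; [|split].
  - intros; rewrite fa, ga; ring.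
  - intros; rewrite fs, gs; ring.
  - exists (M + N)%R. intros x. eapply Rle_trans; [apply Cmod_triangle|].
    specialize (HM x); specialize (HN x). lra.
Qed.

Lemma func_scal c f : is_func f -> is_func (fun x => c * f x).
Proof.
  intros [fa [fs [M HM]]]. split; [|split].
  - intros; rewrite fa; ring.
  - intros; rewrite fs; ring.
  - exists (Cmod c * M)%R. intros x. rewrite Cmod_mult. rewrite Rmult_assoc.
    apply Rmult_le_compat_l; [apply Cmod_ge_0|apply HM].
Qed.

Lemma Mpos (n : X -> R) (m : X -> R) : (forall x, 0 <= m x)%R ->
  (exists M, forall x, n x <= M * m x)%R -> exists M, (0 <= M)%R /\ forall x, (n x <= M * m x)%R.
Proof.
  intros Hm [M HM]. exists (Rabs M). split; [apply Rabs_pos|]. intros x.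
  eapply Rle_trans; [apply HM|]. apply Rmult_le_compat_r; [apply Hm|apply Rle_abs].
Qed.

Lemma func_comp f (T : op X) : is_func f -> in_BX T -> is_func (fun x => f (T x)).
Proof.
  intros [fa [fs HM]] [[Ta Ts] HN]. split; [|split].
  - intros; rewrite Ta, fa; reflexivity.
  - intros; rewrite Ts, fs; reflexivity.
  - destruct (Mpos (fun x => Cmod (f x)) vnorm vnorm_pos HM) as [M [HM0 HM']].
    destruct (Mpos (fun x => vnorm (T x)) vnorm vnorm_pos HN) as [N [HN0 HN']].
    exists (M * N)%R. intros x. eapply Rle_trans; [apply HM'|].
    rewrite Rmult_assoc. apply Rmult_le_compat_l; [exact HM0| apply HN'].
Qed.

End Ops.

Open Scope C_scope.

Lemma myZorn (T : Type) (P : (T -> Prop) -> Prop) :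
  (forall F : (T -> Prop) -> Prop, (forall A, F A -> P A) ->
     (forall A B, F A -> F B -> (forall t, A t -> B t) \/ (forall t, B t -> A t)) ->
     P (fun t => exists2 A, F A & A t)) ->
  exists A, P A /\ forall B, (forall t, A t -> B t) -> P B -> forall t, B t -> A t.
Proof.
  intros H. destruct (@classical_sets.Zorn_bigcup T P) as [A [PA HA]].
  - intros F FP Ftot. apply H; [exact FP| exact Ftot].
  - exists A. split; [exact PA|]. intros B AB PB.
    apply NNPP. intros NBA. apply (HA B); [|exact PB].
    split; [exact AB|]. intros BA. apply NBA. exact BA.
Qed.

Section HB.
Variable X : CBanach.

Definition rs (c : R) (x : X) : X := vscal (RtoC c) x.

Lemma vnorm_rs c x : vnorm (rs c x) = (Rabs c * vnorm x)%R.
Proof. unfold rs. rewrite vnorm_scal', Cmod_R. reflexivity. Qed.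

Lemma vscal_inj (c : C) (x : X) : vscal c x = vzero -> c <> RtoC 0 -> x = vzero.
Proof.
  intros H Hc. rewrite <- (vscal_one' X x), <- (vscal_zero X (/ c)), <- H, vscal_assoc'.
  f_equal. field. exact Hc.
Qed.

Lemma vnorm_pos_nz (x : X) : x <> vzero -> (0 < vnorm x)%R.
Proof.
  intros Hx. destruct (vnorm_pos X x) as [H|H]; [exact H|].
  exfalso; apply Hx, vnorm_zero; auto.
Qed.

Variable w : X.
Hypothesis Hw : w <> vzero.

Definition valid (A : X * R -> Prop) : Prop :=
  (forall x t u, A (x,t) -> A (x,u) -> t = u) /\
  (forall x y t u, A (x,t) -> A (y,u) -> A (vadd x y, t + u)%R) /\
  (forall c x t, A (x,t) -> A (rs c x, c * t)%R) /\
  (forall x t, A (x,t) -> (t <= vnorm x)%R).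

Definition G0 (p : X * R) : Prop := exists c, p = (rs c w, c * vnorm w)%R.

Definition PP (A : X * R -> Prop) : Prop :=
  valid A /\ ((forall p, ~ A p) \/ (forall p, G0 p -> A p)).

Lemma rs_eq_w c d : rs c w = rs d w -> c = d.
Proof.
  intros H. apply NNPP; intros Hcd.
  assert (E : vscal (RtoC c - RtoC d) w = vzero).
  { rewrite <- (vadd_opp X (rs d w)). rewrite <- H at 1. unfold rs. vring. }
  apply Hw. apply (vscal_inj _ _ E). intros E2. apply Hcd.
  apply (f_equal fst) in E2. simpl in E2. lra.
Qed.

Lemma G0_valid : valid G0.
Proof.
  split; [|split; [|split]].
  - intros x t u [c Hc] [d Hd]. injection Hc; injection Hd; intros; subst.
    assert (c = d) by (apply rs_eq_w; congruence). subst. reflexivity.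
  - intros x y t u [c Hc] [d Hd]. injection Hc; injection Hd; intros; subst.
    exists (c + d)%R. f_equal; [unfold rs; vring | ring].
  - intros k x t [c Hc]. injection Hc; intros; subst. exists (k * c)%R.
    f_equal; [unfold rs; vring | ring].
  - intros x t [c Hc]. injection Hc; intros; subst. rewrite vnorm_rs.
    apply Rmult_le_compat_r; [apply vnorm_pos|apply Rle_abs].
Qed.

Lemma exists_max : exists A, PP A /\ forall B, (forall t, A t -> B t) -> PP B -> forall t, B t -> A t.
Proof.
  apply myZorn. intros F FP Ftot. split; [split; [|split; [|split]]|].
  - intros x t u [A FA At] [B FB Bu].
    destruct (Ftot A B FA FB) as [AB|BA].
    + apply (proj1 (proj1 (FP B FB)) x); auto.
    + apply (proj1 (proj1 (FP A FA)) x); auto.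
  - intros x y t u [A FA At] [B FB Bu].
    destruct (Ftot A B FA FB) as [AB|BA].
    + exists B; [exact FB|]. apply (proj1 (proj2 (proj1 (FP B FB)))); auto.
    + exists A; [exact FA|]. apply (proj1 (proj2 (proj1 (FP A FA)))); auto.
  - intros c x t [A FA At]. exists A; [exact FA|]. apply (proj1 (proj2 (proj2 (proj1 (FP A FA))))); auto.
  - intros x t [A FA At]. apply (proj2 (proj2 (proj2 (proj1 (FP A FA))))) with (x := x); auto.
  - destruct (classic (exists A, F A /\ forall p, G0 p -> A p)) as [[A [FA HA]]|N].
    + right. intros p Hp. exists A; auto.
    + left. intros p [A FA Ap]. destruct (proj2 (FP A FA)) as [E|E].
      * apply (E p Ap).
      * apply N. exists A; auto.
Qed.

Section Ext.
Variable A : X * R -> Prop.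
Hypothesis HA : valid A.
Hypothesis A00 : A (vzero, 0%R).
Variable x0 : X.
Hypothesis Hx0 : forall t, ~ A (x0, t).

Definition Sset (s : R) : Prop := exists y u, A (y,u) /\ s = (u - vnorm (vadd y (vopp x0)))%R.

Lemma key_ineq x t y u : A (x,t) -> A (y,u) ->
  (u - vnorm (vadd y (vopp x0)) <= vnorm (vadd x x0) - t)%R.
Proof.
  intros Ht Hu. destruct HA as [_ [Hadd [_ Hdom]]].
  pose proof (Hdom _ _ (Hadd _ _ _ _ Ht Hu)) as H1.
  assert (E : vadd x y = vadd (vadd x x0) (vadd y (vopp x0))) by vring.
  rewrite E in H1. pose proof (vnorm_triangle _ (vadd x x0) (vadd y (vopp x0))). lra.
Qed.

Lemma alpha_ex : { a : R | (forall y u, A (y,u) -> u - vnorm (vadd y (vopp x0)) <= a)%R /\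
   (forall x t, A (x,t) -> a <= vnorm (vadd x x0) - t)%R }.
Proof.
  destruct (completeness Sset) as [a [Ha1 Ha2]].
  - exists (vnorm (vadd vzero x0) - 0)%R. intros s [y [u [Hyu ->]]]. apply (key_ineq _ _ _ _ A00 Hyu).
  - exists (0 - vnorm (vadd vzero (vopp x0)))%R. exists vzero, 0%R. auto.
  - exists a. split.
    + intros y u Hyu. apply Ha1. exists y, u. auto.
    + intros x t Hxt. apply Ha2. intros s [y [u [Hyu ->]]]. apply (key_ineq _ _ _ _ Hxt Hyu).
Qed.

Definition alpha := proj1_sig alpha_ex.

Definition Aext (p : X * R) : Prop :=
  exists x t c, A (x,t) /\ p = (vadd x (rs c x0), t + c * alpha)%R.

Lemma Aext_sup p : A p -> Aext p.
Proof.
  destruct p as [x t]. intros H. exists x, t, 0%R. split; [exact H|].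
  f_equal; [unfold rs; vring | ring].
Qed.

Lemma Aext_valid : valid Aext.
Proof.
  destruct HA as [Hfun [Hadd [Hsc Hdom]]].
  split; [|split; [|split]].
  - intros z t u [x [t1 [c [H1 E1]]]] [y [u1 [d [H2 E2]]]].
    injection E1 as -> ->. injection E2 as H0 ->.
    destruct (Req_dec c d) as [->|Hcd].
    + assert (x = y) by (apply (vadd_cancel X (rs d x0)); rewrite vadd_comm, H0, vadd_comm; reflexivity).
      subst. rewrite (Hfun _ _ _ H1 H2). reflexivity.
    + exfalso. apply (Hx0 ((u1 - t1) / (c - d))).
      assert (E : x0 = rs (/ (c - d)) (vadd y (rs (-1) x))).
      { assert (E3 : vadd y (rs (-1) x) = rs (c - d) x0).
        { transitivity (vadd (vadd y (rs d x0)) (vadd (rs (-1) x) (rs (-d) x0))).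
          - unfold rs. vring.
          - rewrite <- H0. unfold rs. vring. }
        rewrite E3. unfold rs. rewrite vscal_assoc'. rewrite <- (vscal_one' X x0) at 1.
        f_equal. apply C_ext; simpl; field; lra. }
      rewrite E. unfold Rdiv. rewrite Rmult_comm. apply Hsc.
      replace (u1 - t1)%R with (u1 + -1 * t1)%R by ring.
      apply Hadd; [exact H2| apply Hsc; exact H1].
  - intros z1 z2 t u [x [t1 [c [H1 E1]]]] [y [u1 [d [H2 E2]]]].
    injection E1; injection E2; intros; subst.
    exists (vadd x y), (t1 + u1)%R, (c + d)%R. split; [apply Hadd; auto|].
    f_equal; [unfold rs; vring | ring].
  - intros k z t [x [t1 [c [H1 E1]]]]. injection E1; intros; subst.
    exists (rs k x), (k * t1)%R, (k * c)%R. split; [apply Hsc; auto|].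
    f_equal; [unfold rs; vring | ring].
  - intros z t [x [t1 [c [H1 E1]]]]. injection E1; intros; subst.
    destruct (proj2_sig alpha_ex) as [Hlo Hhi]. fold alpha in Hlo, Hhi.
    destruct (Rtotal_order c 0) as [Hc|[Hc|Hc]].
    + set (d := (- c)%R). assert (Hd : (0 < d)%R) by (unfold d; lra).
      pose proof (Hlo (rs (/ d) x) (/ d * t1)%R (Hsc _ _ _ H1)) as L.
      assert (E : vadd (rs (/ d) x) (vopp x0) = rs (/ d) (vadd x (rs c x0))).
      { unfold rs. vring. all: apply C_ext; simpl; unfold d; field; lra. }
      rewrite E, vnorm_rs, Rabs_right in L by (left; apply Rinv_0_lt_compat; lra).
      apply (Rmult_le_compat_l d) in L; [|lra].
      replace (d * (/ d * t1 - / d * vnorm (vadd x (rs c x0))))%R with (t1 - vnorm (vadd x (rs c x0)))%R in L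
        by (field; lra).
      unfold d in L. lra.
    + subst. replace (vadd x (rs 0 x0)) with x by (unfold rs; vring).
      rewrite Rmult_0_l, Rplus_0_r. apply Hdom; auto.
    + pose proof (Hhi (rs (/ c) x) (/ c * t1)%R (Hsc _ _ _ H1)) as L.
      assert (E : vadd (rs (/ c) x) x0 = rs (/ c) (vadd x (rs c x0))).
      { unfold rs. vring. all: apply C_ext; simpl; field; lra. }
      rewrite E, vnorm_rs, Rabs_right in L by (left; apply Rinv_0_lt_compat; lra).
      apply (Rmult_le_compat_l c) in L; [|lra].
      replace (c * (/ c * vnorm (vadd x (rs c x0)) - / c * t1))%R with (vnorm (vadd x (rs c x0)) - t1)%R in L
        by (field; lra).
      lra.
Qed.

Lemma Aext_x0 : Aext (x0, alpha).
Proof.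
  exists vzero, 0%R, 1%R. split; [exact A00|].
  f_equal; [unfold rs; vring | ring].
Qed.

End Ext.

Lemma real_HB : exists phi : X -> R,
  (forall x y, phi (vadd x y) = phi x + phi y)%R /\ (forall c x, phi (rs c x) = c * phi x)%R /\
  (forall x, phi x <= vnorm x)%R /\ phi w = vnorm w.
Proof.
  destruct exists_max as [A [[HA Hbase] Hmax]].
  assert (HG : forall p, G0 p -> A p).
  { destruct Hbase as [E|E]; [|exact E].
    exfalso. assert (G0 (w, vnorm w)) as Hg.
    { exists 1%R. f_equal; [unfold rs; rewrite vscal_one'; reflexivity| ring]. }
    apply (E (w, vnorm w)). apply (Hmax G0); [intros t Ht; exfalso; apply (E t Ht)| |exact Hg].
    split; [exact G0_valid| right; auto]. }
  assert (A00 : A (vzero, 0%R)).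
  { apply HG. exists 0%R. f_equal; [unfold rs; symmetry; apply vscal_0| ring]. }
  assert (Tot : forall x, exists t, A (x,t)).
  { intros x0. apply NNPP. intros N.
    assert (Hx0 : forall t, ~ A (x0,t)) by (intros t Ht; apply N; exists t; exact Ht).
    apply (Hx0 (alpha A HA A00 x0)).
    apply (Hmax (Aext A HA A00 x0)).
    - apply Aext_sup.
    - split; [exact (Aext_valid A HA A00 x0 Hx0)| right; intros p Hp; apply Aext_sup; apply HG; exact Hp].
    - exact (Aext_x0 A HA A00 x0). }
  set (phi := fun x => proj1_sig (constructive_indefinite_description _ (Tot x))).
  assert (Hphi : forall x, A (x, phi x)) by (intros x; exact (proj2_sig (constructive_indefinite_description _ (Tot x)))).
  destruct HA as [Hfun [Hadd [Hsc Hdom]]].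
  exists phi. split; [|split; [|split]].
  - intros x y. apply (Hfun (vadd x y)); [apply Hphi| apply Hadd; apply Hphi].
  - intros c x. apply (Hfun (rs c x)); [apply Hphi| apply Hsc; apply Hphi].
  - intros x. apply Hdom. apply Hphi.
  - apply (Hfun w); [apply Hphi|]. replace w with (rs 1 w) at 1 by (unfold rs; apply vscal_one').
    replace (vnorm w) with (1 * vnorm w)%R by ring. apply HG. exists 1%R. reflexivity.
Qed.

End HB.

Lemma Cmod_le_sum (u v : R) : (Cmod (u, v) <= Rabs u + Rabs v)%R.
Proof.
  replace (u, v) with (RtoC u + RtoC v * Ci)%C by (apply C_ext; simpl; ring).
  eapply Rle_trans; [apply Cmod_triangle|]. rewrite Cmod_mult, Cmod_Ci, !Cmod_R. lra.
Qed.

Lemma HB1 (X : CBanach) (w : X) : w <> vzero -> exists f, is_func X f /\ f w = RtoC 1.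
Proof.
  intros Hw. destruct (real_HB X w Hw) as [phi [Padd [Psc [Pdom Pw]]]].
  assert (Habs : forall x, (Rabs (phi x) <= vnorm x)%R).
  { intros x. apply Rabs_le. split; [|apply Pdom].
    pose proof (Pdom (rs X (-1) x)) as H. rewrite Psc, vnorm_rs, Rabs_m1 in H. lra. }
  set (h := fun x => (phi x, - phi (vscal Ci x))%R : C).
  assert (Hh : is_func X h).
  { split; [|split].
    - intros x y. unfold h. rewrite vscal_distr_v, !Padd. apply C_ext; simpl; ring.
    - intros [p q] x. unfold h.
      assert (E1 : vscal (p,q) x = vadd (rs X p x) (rs X q (vscal Ci x))) by (unfold rs; vring).
      assert (E2 : vscal Ci (vscal (p,q) x) = vadd (rs X (-q) x) (rs X p (vscal Ci x))) by (unfold rs; vring).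
      rewrite E2, E1, !Padd, !Psc. apply C_ext; simpl; ring.
    - exists 2%R. intros x. unfold h. eapply Rle_trans; [apply Cmod_le_sum|].
      rewrite Rabs_Ropp. pose proof (Habs x). pose proof (Habs (vscal Ci x)).
      rewrite vnorm_scal', Cmod_Ci in H0. lra. }
  assert (Hhw : h w <> RtoC 0).
  { intros E. apply (f_equal fst) in E. unfold h in E; simpl in E. rewrite Pw in E.
    pose proof (vnorm_pos_nz X w Hw). lra. }
  exists (fun x => / h w * h x). split.
  - apply func_scal. exact Hh.
  - field. exact Hhw.
Qed.

Open Scope C_scope.

Ltac vfield := vring_prep; try (field; auto); try (apply C_ext; simpl; field; auto).

Lemma Cmult_integral (a b : C) : a * b = RtoC 0 -> a = RtoC 0 \/ b = RtoC 0.
Proof.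
  intros H. destruct (Ceq_dec a (RtoC 0)) as [Ha|Ha]; [left; exact Ha|right].
  replace b with (/ a * (a * b)) by (field; exact Ha). rewrite H. ring.
Qed.

Section Spec.
Variable X : CBanach.

Lemma lin_zero (T : op X) : is_linear X T -> T vzero = vzero.
Proof. intros [_ Ts]. rewrite <- (vscal_0 X vzero) at 1. rewrite Ts. apply vscal_0. Qed.

Lemma lin_opp (T : op X) x : is_linear X T -> T (vopp x) = vopp (T x).
Proof. intros [_ Ts]. rewrite !vopp_scal, Ts. reflexivity. Qed.

Lemma BX_lin (T : op X) : in_BX T -> is_linear X T.
Proof. intros [H _]; exact H. Qed.

Lemma BX_bnd (T : op X) : in_BX T -> exists M, (0 <= M)%R /\ forall x, (vnorm (T x) <= M * vnorm x)%R.
Proof. intros [_ H]. apply (Mpos X (fun x => vnorm (T x)) (@vnorm X) (vnorm_pos X) H). Qed.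

Lemma BX_id : in_BX (fun x : X => x).
Proof. split; [split; auto|]. exists 1%R. intros; lra. Qed.

Lemma BX_zero : in_BX (@op_zero X).
Proof.
  split; [split|].
  - intros; unfold op_zero; rewrite vadd_zero; reflexivity.
  - intros; unfold op_zero; rewrite vscal_zero; reflexivity.
  - exists 0%R. intros x. unfold op_zero. rewrite vnorm_vzero. lra.
Qed.

Lemma BX_add (S T : op X) : in_BX S -> in_BX T -> in_BX (op_add S T).
Proof.
  intros HS HT. destruct (BX_bnd S HS) as [M [HM0 HM]]. destruct (BX_bnd T HT) as [N [HN0 HN]].
  destruct (BX_lin S HS) as [Sa Ss]. destruct (BX_lin T HT) as [Ta Ts].
  split; [split|].
  - intros. unfold op_add. rewrite Sa, Ta. vring.
  - intros. unfold op_add. rewrite Ss, Ts. vring.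
  - exists (M + N)%R. intros x. unfold op_add. eapply Rle_trans; [apply vnorm_triangle|].
    specialize (HM x); specialize (HN x). lra.
Qed.

Lemma BX_scal a (T : op X) : in_BX T -> in_BX (op_scal a T).
Proof.
  intros HT. destruct (BX_bnd T HT) as [N [HN0 HN]]. destruct (BX_lin T HT) as [Ta Ts].
  split; [split|].
  - intros. unfold op_scal. rewrite Ta. vring.
  - intros. unfold op_scal. rewrite Ts. vring.
  - exists (Cmod a * N)%R. intros x. unfold op_scal. rewrite vnorm_scal', Rmult_assoc.
    apply Rmult_le_compat_l; [apply Cmod_ge_0| apply HN].
Qed.

Lemma BX_comp (S T : op X) : in_BX S -> in_BX T -> in_BX (op_comp S T).
Proof.
  intros HS HT. destruct (BX_bnd S HS) as [M [HM0 HM]]. destruct (BX_bnd T HT) as [N [HN0 HN]].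
  destruct (BX_lin S HS) as [Sa Ss]. destruct (BX_lin T HT) as [Ta Ts].
  split; [split|].
  - intros. unfold op_comp. rewrite Ta, Sa. reflexivity.
  - intros. unfold op_comp. rewrite Ts, Ss. reflexivity.
  - exists (M * N)%R. intros x. unfold op_comp. eapply Rle_trans; [apply HM|].
    rewrite Rmult_assoc. apply Rmult_le_compat_l; [exact HM0| apply HN].
Qed.

Lemma BX_pow (T : op X) n : in_BX T -> in_BX (op_pow T n).
Proof.
  intros HT. induction n as [|n IH].
  - unfold op_pow; simpl. apply BX_id.
  - assert (E : op_pow T (S n) = op_comp T (op_pow T n)) by reflexivity.
    rewrite E. apply BX_comp; assumption.
Qed.

Definition r1 (f : X -> C) (u : X) : op X := fun x => vscal (f x) u.

Lemma BX_r1 f u : is_func X f -> in_BX (r1 f u).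
Proof.
  intros [fa [fs HM]]. destruct (Mpos X (fun x => Cmod (f x)) (@vnorm X) (vnorm_pos X) HM) as [M [HM0 HM']].
  split; [split|].
  - intros. unfold r1. rewrite fa. vring.
  - intros. unfold r1. rewrite fs. vring.
  - exists (M * vnorm u)%R. intros x. unfold r1. rewrite vnorm_scal'.
    specialize (HM' x). pose proof (vnorm_pos X u). nra.
Qed.

Lemma not_spec (T : op X) z (S : op X) : in_BX S ->
  (forall x, S (vadd (vscal z x) (vopp (T x))) = x) ->
  (forall x, vadd (vscal z (S x)) (vopp (T (S x))) = x) -> ~ spectrum X T z.
Proof. intros H1 H2 H3 Hs. apply Hs. exists S. auto. Qed.

Lemma eig_spec (T : op X) z v : is_linear X T -> v <> vzero -> T v = vscal z v -> spectrum X T z.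
Proof.
  intros HT Hv Hev [S [HS [H1 _]]]. apply Hv. specialize (H1 v). rewrite Hev in H1.
  rewrite vadd_opp in H1. rewrite <- H1. apply lin_zero. apply BX_lin; exact HS.
Qed.

Lemma Jacobson (A B : op X) z : in_BX A -> in_BX B -> z <> RtoC 0 ->
  spectrum X (op_comp A B) z -> spectrum X (op_comp B A) z.
Proof.
  intros HA HB Hz Hs [W [HW [HW1 HW2]]]. apply Hs.
  destruct (BX_lin A HA) as [Aa As]. destruct (BX_lin B HB) as [Ba Bs].
  destruct (BX_lin W HW) as [Wa Ws].
  exists (op_scal (/ z) (op_add (fun x => x) (op_comp A (op_comp W B)))).
  split; [|split].
  - apply BX_scal, BX_add; [apply BX_id|]. apply BX_comp; [exact HA|]. apply BX_comp; assumption.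
  - intros u. unfold op_scal, op_add, op_comp in *.
    rewrite Ba, Bs, (lin_opp B) by (split; assumption).
    specialize (HW1 (B u)). rewrite HW1. vfield.
  - intros u. unfold op_scal, op_add, op_comp in *.
    set (q := W (B u)).
    assert (Hq : B (A q) = vadd (vscal z q) (vopp (B u))).
    { specialize (HW2 (B u)). fold q in HW2. rewrite <- HW2. vring. }
    assert (HBV : B (vscal (/ z) (vadd u (A q))) = q).
    { rewrite Bs, Ba, Hq. vfield. }
    rewrite HBV. vfield.
Qed.

Lemma nilp_spec0 (R : op X) : (exists x : X, x <> vzero) -> in_BX R ->
  (forall x, R (R x) = vzero) -> spectrum X R (RtoC 0).
Proof.
  intros [x0 Hx0] HR HRR [S [HS [H1 H2]]]. apply Hx0.
  assert (Hlin := BX_lin R HR).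
  assert (E : forall x, R x = vzero).
  { intros x. specialize (H2 x). rewrite vscal_0, vadd_zero_l in H2.
    rewrite <- H2, lin_opp, HRR by exact Hlin. rewrite vopp_scal, vscal_zero. reflexivity. }
  specialize (H1 x0). rewrite E, vscal_0, vadd_zero_l, vopp_scal, vscal_zero in H1.
  rewrite <- H1. apply lin_zero. apply BX_lin; exact HS.
Qed.

Lemma G1_spec (R : op X) (l z : C) : in_BX R -> (forall x, R (R x) = vscal l (R x)) ->
  spectrum X R z -> z = RtoC 0 \/ z = l.
Proof.
  intros HR HRR Hs. apply NNPP. intros N. apply Hs.
  assert (Hz : z <> RtoC 0) by tauto. assert (Hzl : z - l <> RtoC 0).
  { intros E. apply N. right. apply (f_equal (fun t => t + l)) in E. rewrite Cplus_0_l in E.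
    rewrite <- E. ring. }
  destruct (BX_lin R HR) as [Ra Rs].
  exists (op_scal (/ z) (op_add (fun x => x) (op_scal (/ (z - l)) R))). split; [|split].
  - apply BX_scal, BX_add; [apply BX_id| apply BX_scal; exact HR].
  - intros x. unfold op_scal, op_add. rewrite Ra, Rs, (lin_opp R) by (split; assumption).
    rewrite HRR. vfield.
  - intros x. unfold op_scal, op_add. rewrite Rs, Ra, Rs, HRR. vfield.
Qed.

Lemma cubic_spec (N : op X) (m z : C) : in_BX N -> (forall x, N (N (N x)) = vscal (m * m) (N x)) ->
  spectrum X N z -> z = RtoC 0 \/ z = m \/ z = - m.
Proof.
  intros HN HNNN Hs. apply NNPP. intros Nn. apply Hs.
  assert (Hz : z <> RtoC 0) by tauto.
  assert (Hzm : z * z - m * m <> RtoC 0).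
  { intros E. apply Nn. right.
    assert (E2 : (z - m) * (z + m) = RtoC 0) by (rewrite <- E; ring).
    apply Cmult_integral in E2. destruct E2 as [E2|E2].
    - left. replace z with ((z - m) + m) by ring. rewrite E2. ring.
    - right. replace z with ((z + m) - m) by ring. rewrite E2. ring. }
  destruct (BX_lin N HN) as [Na Ns].
  set (b := / (z * z - m * m)).
  exists (op_add (op_scal (/ z) (fun x => x)) (op_add (op_scal b N) (op_scal (b / z) (op_comp N N)))).
  split; [|split].
  - apply BX_add; [apply BX_scal, BX_id|]. apply BX_add; apply BX_scal; [exact HN| apply BX_comp; exact HN].
  - intros x. cbv [op_scal op_add op_comp]. rewrite !Na, !Ns, !(lin_opp N) by (split; assumption).
    rewrite HNNN. unfold b. vfield.
  - intros x. cbv [op_scal op_add op_comp]. rewrite !Na, !Ns, ?Na, ?Ns, HNNN. unfold b. vfield.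
Qed.

End Spec.

Open Scope C_scope.

Section Per.
Variable X : CBanach.

Lemma Cmod_eq_0' (z : C) : Cmod z = 0%R -> z = RtoC 0.
Proof. apply Cmod_eq_0. Qed.

Lemma per_ge (T : op X) z w : periph_spectrum T z -> spectrum X T w -> (Cmod w <= Cmod z)%R.
Proof. intros [_ [Hub _]] Hw. apply Hub. exists w. auto. Qed.

Lemma per_eq_mod (T : op X) z z' : periph_spectrum T z -> periph_spectrum T z' -> Cmod z = Cmod z'.
Proof.
  intros H1 H2. apply Rle_antisym; [apply (per_ge T z' z H2 (proj1 H1)) | apply (per_ge T z z' H1 (proj1 H2))].
Qed.

Lemma per_two (T : op X) l1 l2 :
  (forall z, spectrum X T z -> z = RtoC 0 \/ z = l1 \/ z = l2) ->
  spectrum X T l1 -> spectrum X T l2 -> Cmod l1 = Cmod l2 ->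
  periph_spectrum T l1 /\ periph_spectrum T l2.
Proof.
  intros Hsub H1 H2 Hm.
  assert (Hlub : is_spectral_radius X T (Cmod l1)).
  { split.
    - intros t [w [Hw ->]]. destruct (Hsub w Hw) as [ -> | [ -> | -> ] ].
      + change (Cmod (RtoC 0) <= Cmod l1)%R. rewrite Cmod_0. apply Cmod_ge_0.
      + apply Rle_refl.
      + change (Cmod l2 <= Cmod l1)%R. rewrite Hm; apply Rle_refl.
    - intros b Hb. apply Hb. exists l1. auto. }
  split; split; auto. change (is_spectral_radius X T (Cmod l2)). rewrite <- Hm. exact Hlub.
Qed.

Lemma per_G1_unique (R : op X) l z z' : in_BX R -> (forall x, R (R x) = vscal l (R x)) ->
  periph_spectrum R z -> periph_spectrum R z' -> z = z'.
Proof.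
  intros HR HRR H1 H2. pose proof (per_eq_mod R z z' H1 H2) as Hm.
  destruct (G1_spec X R l z HR HRR (proj1 H1)) as [ -> | -> ];
  destruct (G1_spec X R l z' HR HRR (proj1 H2)) as [ -> | -> ]; auto.
  - change (Cmod (RtoC 0) = Cmod l) in Hm. rewrite Cmod_0 in Hm. symmetry in Hm. apply Cmod_eq_0' in Hm. auto.
  - change (Cmod l = Cmod (RtoC 0)) in Hm. rewrite Cmod_0 in Hm. apply Cmod_eq_0' in Hm. auto.
Qed.

Lemma per_G1_exact (R : op X) l : (exists x : X, x <> vzero) -> in_BX R ->
  (forall x, R (R x) = vscal l (R x)) -> (l <> RtoC 0 -> spectrum X R l) ->
  forall z, periph_spectrum R z <-> z = l.
Proof.
  intros Hnt HR HRR Hl z. split.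
  - intros Hz. destruct (G1_spec X R l z HR HRR (proj1 Hz)) as [ -> | -> ]; auto.
    destruct (Ceq_dec l (RtoC 0)) as [E|E]; auto.
    pose proof (per_ge R _ _ Hz (Hl E)). change (Cmod l <= Cmod (RtoC 0))%R in H.
    rewrite Cmod_0 in H. exfalso; apply E, Cmod_eq_0'. pose proof (Cmod_ge_0 l). lra.
  - intros ->. destruct (Ceq_dec l (RtoC 0)) as [E|E].
    + subst. assert (H0 : spectrum X R (RtoC 0)).
      { apply nilp_spec0; auto. intros x. rewrite HRR. apply vscal_0. }
      apply (per_two R (RtoC 0) (RtoC 0)); auto.
      intros w Hw. destruct (G1_spec X R (RtoC 0) w HR HRR Hw); auto.
    + apply (per_two R l l); auto.
      intros w Hw. destruct (G1_spec X R l w HR HRR Hw); auto.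
Qed.

Lemma op_pow_add (B : op X) m n x : op_pow B (m + n) x = op_pow B m (op_pow B n x).
Proof. unfold op_pow. apply Nat.iter_add. Qed.

Lemma sandwich_jac (B A : op X) r s z : in_BX B -> in_BX A -> z <> RtoC 0 ->
  (spectrum X (sandwich r s B A) z <-> spectrum X (op_comp A (op_pow B (r + s))) z).
Proof.
  intros HB HA Hz.
  assert (E : op_comp (op_comp A (op_pow B s)) (op_pow B r) = op_comp A (op_pow B (r + s))).
  { apply functional_extensionality. intros x. unfold op_comp. rewrite Nat.add_comm, op_pow_add. reflexivity. }
  unfold sandwich. rewrite <- E. split; intros H.
  - apply Jacobson; auto; [apply BX_pow; auto| apply BX_comp; [auto| apply BX_pow; auto]].
  - apply Jacobson; auto; [apply BX_comp; [auto| apply BX_pow; auto]| apply BX_pow; auto].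
Qed.

Definition indep2 (b1 b2 : X) : Prop :=
  forall a b, vadd (vscal a b1) (vscal b b2) = vzero -> a = RtoC 0 /\ b = RtoC 0.

Lemma two_eig (N : op X) b1 b2 k11 k12 k21 m : in_BX N -> indep2 b1 b2 ->
  N b1 = vadd (vscal k11 b1) (vscal k21 b2) ->
  N b2 = vadd (vscal k12 b1) (vscal (- k11) b2) ->
  m * m = k11 * k11 + k12 * k21 -> m <> RtoC 0 -> spectrum X N m.
Proof.
  intros HN Hind H1 H2 Hm Hm0. destruct (BX_lin X N HN) as [Na Ns].
  assert (Hk : k12 * k21 = m * m - k11 * k11) by (rewrite Hm; ring).
  destruct (classic (k12 = RtoC 0 /\ m - k11 = RtoC 0)) as [[E1 E2]|NE].
  - apply (eig_spec X N m (vadd (vscal (m + k11) b1) (vscal k21 b2))); [split; auto| |].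
    + intros E. destruct (Hind _ _ E) as [E3 _]. apply Hm0.
      assert (H2n : RtoC 2 <> RtoC 0) by (intros E5; apply (f_equal fst) in E5; simpl in E5; lra).
      assert (Em : m = ((m + k11) + (m - k11)) / RtoC 2) by (field; exact H2n).
      rewrite Em, E3, E2. field.
    + rewrite Na, !Ns, H1, H2.
      transitivity (vadd (vscal (m * (m + k11) + (k11 * k11 + k12 * k21 - m * m)) b1) (vscal (m * k21) b2)); [vring|].
      rewrite Hk. vring.
  - apply (eig_spec X N m (vadd (vscal k12 b1) (vscal (m - k11) b2))); [split; auto| |].
    + intros E. destruct (Hind _ _ E) as [E3 E4]. apply NE. auto.
    + rewrite Na, !Ns, H1, H2.
      transitivity (vadd (vscal (m * k12) b1) (vscal (k12 * k21 + k11 * k11 - m * k11) b2)); [vring|].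
      rewrite Hk. vring.
Qed.

Lemma two_cubic (N : op X) b1 b2 k11 k12 k21 m : in_BX N ->
  (forall x, exists c1 c2, N x = vadd (vscal c1 b1) (vscal c2 b2)) ->
  N b1 = vadd (vscal k11 b1) (vscal k21 b2) ->
  N b2 = vadd (vscal k12 b1) (vscal (- k11) b2) ->
  m * m = k11 * k11 + k12 * k21 -> forall x, N (N (N x)) = vscal (m * m) (N x).
Proof.
  intros HN Hr H1 H2 Hm x. destruct (BX_lin X N HN) as [Na Ns].
  destruct (Hr x) as [c1 [c2 E]]. rewrite E, !Na, !Ns, H1, H2, !Na, !Ns, H1, H2, Hm. vring.
Qed.

Lemma two_point (B A : op X) r s b1 b2 k11 k12 k21 m : in_BX B -> in_BX A -> indep2 b1 b2 ->
  (forall x, exists c1 c2, A (op_pow B (r + s) x) = vadd (vscal c1 b1) (vscal c2 b2)) ->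
  A (op_pow B (r + s) b1) = vadd (vscal k11 b1) (vscal k21 b2) ->
  A (op_pow B (r + s) b2) = vadd (vscal k12 b1) (vscal (- k11) b2) ->
  m * m = k11 * k11 + k12 * k21 -> m <> RtoC 0 ->
  periph_spectrum (sandwich r s B A) m /\ periph_spectrum (sandwich r s B A) (- m).
Proof.
  intros HB HA Hind Hr H1 H2 Hm Hm0.
  set (N := op_comp A (op_pow B (r + s))).
  assert (HN : in_BX N) by (apply BX_comp; [auto| apply BX_pow; auto]).
  assert (Hm0' : - m <> RtoC 0) by (intros E; apply Hm0; replace m with (- - m) by ring; rewrite E; ring).
  apply per_two.
  - intros z Hz. destruct (Ceq_dec z (RtoC 0)) as [E|E]; [left; exact E| right].
    apply (sandwich_jac B A r s z HB HA E) in Hz.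
    destruct (cubic_spec X N m z HN (two_cubic N b1 b2 k11 k12 k21 m HN Hr H1 H2 Hm) Hz) as [E2|E2]; [contradiction|exact E2].
  - apply (sandwich_jac B A r s m HB HA Hm0). apply (two_eig N b1 b2 k11 k12 k21 m); auto.
  - apply (sandwich_jac B A r s (- m) HB HA Hm0'). apply (two_eig N b1 b2 k11 k12 k21 (- m)); auto.
    rewrite <- Hm. ring.
  - change (Cmod m = Cmod (- m)). rewrite Cmod_opp. reflexivity.
Qed.

End Per.

Open Scope C_scope.

Section Fn.
Variable X : CBanach.

Lemma func_lc f a b (x y : X) : is_func X f -> f (vadd (vscal a x) (vscal b y)) = a * f x + b * f y.
Proof. intros [fa [fs _]]. rewrite fa, !fs. reflexivity. Qed.

Lemma C1_neq0 : RtoC 1 <> RtoC 0.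
Proof. intros E. apply (f_equal fst) in E. simpl in E. lra. Qed.

Lemma indep_nz1 (w1 w2 : X) : indep2 X w1 w2 -> w1 <> vzero.
Proof.
  intros H E. destruct (H (RtoC 1) (RtoC 0)) as [E1 _]; [rewrite E, vscal_zero, vscal_0, vadd_zero; reflexivity|].
  apply C1_neq0; exact E1.
Qed.

Lemma indep_sym (w1 w2 : X) : indep2 X w1 w2 -> indep2 X w2 w1.
Proof. intros H a b E. rewrite vadd_comm in E. destruct (H b a E). auto. Qed.

Lemma dual2 (w1 w2 : X) : indep2 X w1 w2 -> exists d1 d2, is_func X d1 /\ is_func X d2 /\
  d1 w1 = RtoC 1 /\ d1 w2 = RtoC 0 /\ d2 w1 = RtoC 0 /\ d2 w2 = RtoC 1.
Proof.
  intros Hi. destruct (HB1 X w1 (indep_nz1 w1 w2 Hi)) as [h1 [Hh1 Eh1]].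
  set (w' := vadd w2 (vscal (- h1 w2) w1)).
  assert (Hw' : w' <> vzero).
  { intros E. destruct (Hi (- h1 w2) (RtoC 1)) as [_ E2].
    - rewrite <- E. unfold w'. vring.
    - apply C1_neq0; exact E2. }
  destruct (HB1 X w' Hw') as [h2 [Hh2 Eh2]].
  assert (Hh1w' : h1 w' = RtoC 0).
  { unfold w'. destruct Hh1 as [fa [fs _]]. rewrite fa, fs, Eh1. ring. }
  set (d2 := fun x => h2 x + (- h2 w1) * h1 x).
  assert (Hd2 : is_func X d2) by (apply func_add; [auto| apply func_scal; auto]).
  assert (Ew2 : w2 = vadd w' (vscal (h1 w2) w1)) by (unfold w'; vring).
  assert (D2w1 : d2 w1 = RtoC 0) by (unfold d2; rewrite Eh1; ring).
  assert (D2w2 : d2 w2 = RtoC 1).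
  { rewrite Ew2. destruct Hd2 as [fa [fs _]]. rewrite fa, fs, D2w1. unfold d2. rewrite Eh2, Hh1w'. ring. }
  exists (fun x => h1 x + (- h1 w2) * d2 x), d2. split; [|split; [|split; [|split; [|split]]]].
  - apply func_add; [auto| apply func_scal; auto].
  - exact Hd2.
  - simpl. rewrite Eh1, D2w1. ring.
  - simpl. rewrite D2w2. ring.
  - exact D2w1.
  - exact D2w2.
Qed.

Lemma ext1 (a1 a2 u : X) f1 f2 : is_func X f1 -> is_func X f2 ->
  f1 a1 = RtoC 1 -> f1 a2 = RtoC 0 -> f2 a1 = RtoC 0 -> f2 a2 = RtoC 1 ->
  vadd u (vopp (vadd (vscal (f1 u) a1) (vscal (f2 u) a2))) <> vzero ->
  exists g, is_func X g /\ g a1 = RtoC 0 /\ g a2 = RtoC 0 /\ g u = RtoC 1.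
Proof.
  intros Hf1 Hf2 E11 E12 E21 E22 Hw.
  destruct (HB1 X _ Hw) as [h [Hh Eh]].
  exists (fun x => h x + (- h a1) * f1 x + (- h a2) * f2 x). split; [|split; [|split]].
  - apply func_add; [apply func_add|]; [auto| apply func_scal; auto| apply func_scal; auto].
  - simpl. rewrite E11, E21. ring.
  - simpl. rewrite E12, E22. ring.
  - simpl. rewrite <- Eh. pose proof (func_opp X h) as Ho. destruct Hh as [fa [fs HB]]. rewrite fa, Ho by (split; auto). rewrite fa, !fs.
    apply C_ext; simpl; ring.
Qed.

Lemma Sep (T : op X) : is_linear X T ->
  (forall y g, is_func X g -> g y = RtoC 1 -> g (T y) = RtoC 0) -> forall y, T y = vzero.
Proof.
  intros HT H y. apply NNPP. intros Hty.
  assert (Hy : y <> vzero) by (intros E; apply Hty; rewrite E; apply lin_zero; auto).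
  destruct (classic (exists a, T y = vscal a y)) as [[a Ea]|Na].
  - destruct (HB1 X y Hy) as [g [Hg Eg]]. pose proof (H y g Hg Eg) as E.
    rewrite Ea in E. destruct Hg as [_ [fs _]]. rewrite fs, Eg in E.
    apply Hty. rewrite Ea. replace a with (a * RtoC 1) by ring. rewrite E. apply vscal_0.
  - assert (Hi : indep2 X y (T y)).
    { intros a b E. destruct (Ceq_dec b (RtoC 0)) as [Eb|Eb].
      - subst. rewrite vscal_0, vadd_zero in E. split; auto.
        apply NNPP; intros Ea. apply Hy. apply (vscal_inj X a y E Ea).
      - exfalso. apply Na. exists (- a / b).
        rewrite <- (vscal_one' X (T y)). replace (RtoC 1) with (/ b * b) by (field; auto).
        rewrite <- vscal_assoc'. 
        assert (E2 : vscal b (T y) = vscal (- a) y).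
        { apply (vadd_cancel X (vscal a y)). rewrite E. vring. }
        rewrite E2, vscal_assoc'. f_equal. field. auto. }
    destruct (dual2 _ _ Hi) as [d1 [d2 [Hd1 [Hd2 [E1 [E2 [E3 E4]]]]]]].
    assert (Hg1 : d1 y + d2 y = RtoC 1) by (rewrite E1, E3; ring).
    pose proof (H y (fun x => d1 x + d2 x) (func_add X d1 d2 Hd1 Hd2) Hg1) as E.
    simpl in E. rewrite E2, E4 in E. apply C1_neq0. rewrite <- E. ring.
Qed.

Lemma rank1_form (T : op X) : rank_le T 1 -> exists v, forall x, exists c, T x = vscal c v.
Proof.
  intros [v Hv]. exists (v 0%nat). intros x. destruct (Hv x) as [c Ec]. exists (c 0%nat).
  rewrite Ec. simpl. apply vadd_zero_l.
Qed.

Lemma rank1_of_form (T : op X) v : (forall x, exists c, T x = vscal c v) -> rank_le T 1.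
Proof.
  intros H. exists (fun _ => v). intros x. destruct (H x) as [c Ec]. exists (fun _ => c).
  rewrite Ec. simpl. rewrite vadd_zero_l. reflexivity.
Qed.

Lemma not_rank1 (T : op X) : in_BX T -> ~ rank_le T 1 -> exists u1 u2, indep2 X (T u1) (T u2).
Proof.
  intros HT Hn. destruct (classic (forall x, T x = vzero)) as [Z|Z].
  - exfalso. apply Hn. apply (rank1_of_form T vzero). intros x. exists (RtoC 0). rewrite Z, vscal_zero. reflexivity.
  - apply not_all_ex_not in Z. destruct Z as [u1 Hu1].
    destruct (classic (forall x, exists c, T x = vscal c (T u1))) as [A|A].
    + exfalso. apply Hn. exact (rank1_of_form T _ A).
    + apply not_all_ex_not in A. destruct A as [u2 Hu2]. exists u1, u2.
      intros a b E. destruct (Ceq_dec b (RtoC 0)) as [Eb|Eb].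
      * subst. rewrite vscal_0, vadd_zero in E. split; auto.
        apply NNPP; intros Ea. apply Hu1. apply (vscal_inj X a _ E Ea).
      * exfalso. apply Hu2. exists (- a / b).
        rewrite <- (vscal_one' X (T u2)). replace (RtoC 1) with (/ b * b) by (field; auto).
        rewrite <- vscal_assoc'.
        assert (E2 : vscal b (T u2) = vscal (- a) (T u1)).
        { apply (vadd_cancel X (vscal a (T u1))). rewrite E. vring. }
        rewrite E2, vscal_assoc'. f_equal. field. auto.
Qed.

Lemma rank1_sq (R : op X) : in_BX R -> rank_le R 1 -> exists l, forall x, R (R x) = vscal l (R x).
Proof.
  intros HR Hr. destruct (rank1_form R Hr) as [v Hv]. destruct (Hv v) as [cv Ev].
  destruct (BX_lin X R HR) as [Ra Rs].
  exists cv. intros x. destruct (Hv x) as [c Ec]. rewrite Ec, Rs, Ev. rewrite !vscal_assoc'. f_equal. ring.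
Qed.

Lemma sandwich_rank1 (B A : op X) r s : in_BX B -> rank_le A 1 -> rank_le (sandwich r s B A) 1.
Proof.
  intros HB HA. destruct (rank1_form A HA) as [v Hv].
  apply (rank1_of_form _ (op_pow B r v)). intros x. unfold sandwich, op_comp.
  destruct (Hv (op_pow B s x)) as [c Ec]. exists c. rewrite Ec.
  destruct (BX_lin X _ (BX_pow X B r HB)) as [_ Ps]. apply Ps.
Qed.

End Fn.

Open Scope C_scope.

Section K.
Variable X : CBanach.

Lemma nilp3_spec0 (R : op X) : (exists x : X, x <> vzero) -> in_BX R ->
  (forall x, R (R (R x)) = vzero) -> spectrum X R (RtoC 0).
Proof.
  intros [x0 Hx0] HR HRRR [S [HS [H1 H2]]]. apply Hx0.
  assert (Hlin := BX_lin X R HR).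
  assert (E : forall x, x = vopp (R (S x))).
  { intros x. rewrite <- (H2 x) at 1. rewrite vscal_0, vadd_zero_l. reflexivity. }
  rewrite (E x0), (E (S x0)), (E (S (S x0))).
  rewrite !(lin_opp X R) by exact Hlin. rewrite HRRR. rewrite !vopp_scal, !vscal_zero. reflexivity.
Qed.

Lemma per_exact (R : op X) l :
  (forall z, spectrum X R z -> z = RtoC 0 \/ z = l) ->
  (l <> RtoC 0 -> spectrum X R l) -> (l = RtoC 0 -> spectrum X R (RtoC 0)) ->
  forall z, periph_spectrum R z <-> z = l.
Proof.
  intros Hsub Hl H0 z. split.
  - intros Hz. destruct (Hsub z (proj1 Hz)) as [ -> | -> ]; auto.
    destruct (Ceq_dec l (RtoC 0)) as [E|E]; auto.
    pose proof (per_ge X R _ _ Hz (Hl E)). change (Cmod l <= Cmod (RtoC 0))%R in H.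
    rewrite Cmod_0 in H. exfalso; apply E, Cmod_eq_0'. pose proof (Cmod_ge_0 l). lra.
  - intros ->. destruct (Ceq_dec l (RtoC 0)) as [E|E].
    + subst. refine (proj1 (per_two X R (RtoC 0) (RtoC 0) _ _ _ _)).
      * intros w Hw. destruct (Hsub w Hw); auto.
      * apply H0; reflexivity.
      * apply H0; reflexivity.
      * reflexivity.
    + refine (proj1 (per_two X R l l _ _ _ _)).
      * intros w Hw. destruct (Hsub w Hw); auto.
      * apply Hl; exact E.
      * apply Hl; exact E.
      * reflexivity.
Qed.

Lemma Klemma (A : op X) (g : X -> C) (y : X) r s : (exists x : X, x <> vzero) ->
  (1 <= r + s)%nat -> in_BX A -> is_func X g -> g y = RtoC 1 ->
  forall z, periph_spectrum (sandwich r s (r1 X g y) A) z <-> z = g (A y).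
Proof.
  intros Hnt Hrs HA Hg Hgy.
  set (P := r1 X g y).
  assert (HP : in_BX P) by (apply BX_r1; auto).
  destruct (BX_lin X A HA) as [Aa As].
  destruct Hg as [ga [gs gb]].
  assert (PP : forall x, P (P x) = P x).
  { intros x. unfold P, r1. rewrite gs, Hgy. f_equal. ring. }
  assert (Ppow : forall k x, (1 <= k)%nat -> op_pow P k x = P x).
  { intros k x Hk. induction k as [|k IH]; [lia|]. destruct k as [|k].
    - reflexivity.
    - change (P (op_pow P (S k) x) = P x). rewrite IH by lia. apply PP. }
  set (l := g (A y)).
  set (N := op_comp A (op_pow P (r + s))).
  assert (HN : in_BX N) by (apply BX_comp; [auto| apply BX_pow; auto]).
  assert (Nx : forall x, N x = vscal (g x) (A y)).
  { intros x. unfold N, op_comp. rewrite Ppow by lia. unfold P, r1. apply As. }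
  assert (NN : forall x, N (N x) = vscal l (N x)).
  { intros x. rewrite !Nx, gs, vscal_assoc'. fold l. f_equal. ring. }
  assert (Ay0 : l <> RtoC 0 -> A y <> vzero).
  { intros Hl E. apply Hl. unfold l. rewrite E. apply (func_zero X g). split; auto. }
  set (R := sandwich r s P A).
  assert (HR : in_BX R) by (unfold R, sandwich; apply BX_comp; [apply BX_pow; auto| apply BX_comp; [auto| apply BX_pow; auto]]).
  apply per_exact.
  - intros z Hz. destruct (Ceq_dec z (RtoC 0)) as [E|E]; [left; exact E| right].
    apply (sandwich_jac X P A r s z HP HA E) in Hz.
    destruct (G1_spec X N l z HN NN Hz) as [E2|E2]; [contradiction| exact E2].
  - intros Hl. apply (sandwich_jac X P A r s l HP HA Hl).
    apply (eig_spec X N l (A y)); [apply BX_lin; auto| apply Ay0; auto| ].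
    rewrite Nx. reflexivity.
  - intros Hl. apply nilp3_spec0; auto.
    assert (Key : forall v, A (op_pow P s (op_pow P r v)) = vscal (g v) (A y)).
    { intros v. rewrite <- op_pow_add, Nat.add_comm. apply Nx. }
    intros x. unfold R, sandwich, op_comp; cbv beta.
    rewrite (Key (A (op_pow P s (op_pow P r (A (op_pow P s x)))))).
    rewrite (Key (A (op_pow P s x))). rewrite gs. fold l. rewrite Hl.
    replace (g (A (op_pow P s x)) * RtoC 0) with (RtoC 0) by ring.
    rewrite vscal_0. apply lin_zero. apply BX_lin, BX_pow; auto.
Qed.

End K.

Open Scope C_scope.

Section VA.
Variable X : CBanach.

Lemma rank2_form (A : op X) u1 u2 (c1 c2 : X -> C) :
  (forall x, A x = vadd (vscal (c1 x) u1) (vscal (c2 x) u2)) -> rank_le A 2.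
Proof.
  intros H. exists (fun i => match i with O => u1 | _ => u2 end). intros x.
  exists (fun i => match i with O => c1 x | _ => c2 x end). rewrite H. simpl. rewrite vadd_zero_l. reflexivity.
Qed.

Lemma VA (B : op X) r s : in_BX B -> ~ rank_le (op_pow B (r + s)) 1 ->
  exists A, in_BX A /\ rank_le A 2 /\ exists m, m <> RtoC 0 /\
    periph_spectrum (sandwich r s B A) m /\ periph_spectrum (sandwich r s B A) (- m).
Proof.
  intros HB Hn. set (Bn := op_pow B (r + s)).
  assert (HBn : in_BX Bn) by (apply BX_pow; auto).
  destruct (not_rank1 X Bn HBn Hn) as [u1 [u2 Hi]].
  destruct (dual2 X _ _ Hi) as [d1 [d2 [Hd1 [Hd2 [E1 [E2 [E3 E4]]]]]]].
  set (A := op_add (r1 X d1 u1) (r1 X (fun x => RtoC (-1) * d2 x) u2)).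
  assert (HA : in_BX A) by (apply BX_add; apply BX_r1; [auto| apply func_scal; auto]).
  exists A. split; [exact HA|]. split.
  - apply (rank2_form A u1 u2 d1 (fun x => RtoC (-1) * d2 x)). intros x. reflexivity.
  - exists (RtoC 1). split; [apply C1_neq0|].
    destruct (BX_lin X Bn HBn) as [Ba Bs].
    apply (two_point X B A r s u1 u2 (RtoC 1) (RtoC 0) (RtoC 0) (RtoC 1)); auto.
    + intros a b E. apply Hi. rewrite <- (lin_zero X Bn) by (split; auto). rewrite <- E, Ba, !Bs. reflexivity.
    + intros x. exists (d1 (op_pow B (r + s) x)), (RtoC (-1) * d2 (op_pow B (r + s) x)). reflexivity.
    + unfold A, op_add, r1. fold Bn. rewrite E1, E3. vring.
    + unfold A, op_add, r1. fold Bn. rewrite E2, E4. vring.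
    + ring.
    + apply C1_neq0.
Qed.

Definition biorth (a1 a2 : X) f1 f2 : Prop :=
  is_func X f1 /\ is_func X f2 /\ f1 a1 = RtoC 1 /\ f1 a2 = RtoC 0 /\ f2 a1 = RtoC 0 /\ f2 a2 = RtoC 1.

Lemma biorth_intro (a1 a2 : X) f1 f2 : is_func X f1 -> is_func X f2 ->
  f1 a1 = RtoC 1 -> f1 a2 = RtoC 0 -> f2 a1 = RtoC 0 -> f2 a2 = RtoC 1 -> biorth a1 a2 f1 f2.
Proof. intros; unfold biorth; tauto. Qed.

Lemma Cneq (x y : R) : x <> y -> RtoC x <> RtoC y.
Proof. intros H E. apply H. apply (f_equal fst) in E. exact E. Qed.

Lemma improve_rk1 (a1 a2 b1 b2 : X) f1 f2 : biorth a1 a2 f1 f2 -> indep2 X b1 b2 ->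
  f1 b1 * f2 b2 - f1 b2 * f2 b1 = RtoC 0 ->
  ~ (f1 b1 = RtoC 0 /\ f1 b2 = RtoC 0 /\ f2 b1 = RtoC 0 /\ f2 b2 = RtoC 0) ->
  exists g1 g2, biorth a1 a2 g1 g2 /\ g1 b1 * g2 b2 - g1 b2 * g2 b1 <> RtoC 0.
Proof.
  intros [Hf1 [Hf2 [E11 [E12 [E21 E22]]]]] Hi Hdet Hnz.
  set (m11 := f1 b1) in *. set (m12 := f1 b2) in *. set (m21 := f2 b1) in *. set (m22 := f2 b2) in *.
  destruct (classic (m11 = RtoC 0 /\ m12 = RtoC 0)) as [[Z1 Z2]|Row1].
  -
    set (b := vadd (vscal (- m22) b1) (vscal m21 b2)).
    assert (Hb : b <> vzero).
    { intros E. destruct (Hi _ _ E) as [Ea Eb]. apply Hnz. repeat split; auto.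
      replace m22 with (- - m22) by ring. rewrite Ea. ring. }
    assert (F1b : f1 b = RtoC 0) by (unfold b; rewrite func_lc by auto; fold m12 m11; rewrite Z1, Z2; ring).
    assert (F2b : f2 b = RtoC 0) by (unfold b; rewrite func_lc by auto; fold m21 m22; ring).
    destruct (ext1 X a1 a2 b f1 f2 Hf1 Hf2 E11 E12 E21 E22) as [g [Hg [Ga1 [Ga2 Gb]]]].
    { rewrite F1b, F2b, vscal_0, vscal_0, vadd_zero, vopp_scal, vscal_zero, vadd_zero. exact Hb. }
    exists (fun x => f1 x + g x), f2. split.
    + apply biorth_intro; auto; [apply func_add; auto| simpl; rewrite E11, Ga1; ring | simpl; rewrite E12, Ga2; ring].
    + simpl. fold m11 m12 m21 m22. rewrite Z1, Z2.
      assert (Gb' : - m22 * g b1 + m21 * g b2 = RtoC 1) by (rewrite <- Gb; unfold b; rewrite func_lc by auto; reflexivity).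
      replace ((RtoC 0 + g b1) * m22 - (RtoC 0 + g b2) * m21) with (- (- m22 * g b1 + m21 * g b2)) by ring.
      rewrite Gb'. intros E. apply C1_neq0. replace (RtoC 1) with (- - RtoC 1) by ring. rewrite E. ring.
  - set (b := vadd (vscal (- m12) b1) (vscal m11 b2)).
    assert (Hb : b <> vzero).
    { intros E. destruct (Hi _ _ E) as [Ea Eb]. apply Row1. split; auto.
      replace m12 with (- - m12) by ring. rewrite Ea. ring. }
    assert (F1b : f1 b = RtoC 0) by (unfold b; rewrite func_lc by auto; fold m12 m11; ring).
    assert (F2b : f2 b = RtoC 0) by (unfold b; rewrite func_lc by auto; fold m21 m22;
      rewrite <- Hdet; ring).
    destruct (ext1 X a1 a2 b f1 f2 Hf1 Hf2 E11 E12 E21 E22) as [g [Hg [Ga1 [Ga2 Gb]]]].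
    { rewrite F1b, F2b, vscal_0, vscal_0, vadd_zero, vopp_scal, vscal_zero, vadd_zero. exact Hb. }
    exists f1, (fun x => f2 x + g x). split.
    + apply biorth_intro; auto; [apply func_add; auto| simpl; rewrite E21, Ga1; ring | simpl; rewrite E22, Ga2; ring].
    + simpl. fold m11 m12 m21 m22.
      assert (Gb' : - m12 * g b1 + m11 * g b2 = RtoC 1) by (rewrite <- Gb; unfold b; rewrite func_lc by auto; reflexivity).
      replace (m11 * (m22 + g b2) - m12 * (m21 + g b1)) with ((m11 * m22 - m12 * m21) + (- m12 * g b1 + m11 * g b2)) by ring.
      rewrite Gb'. fold m11 m12 m21 m22 in Hdet. rewrite Hdet.
      replace (RtoC 0 + RtoC 1) with (RtoC 1) by ring. apply C1_neq0.
Qed.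

Lemma adjust (a1 a2 b1 b2 : X) : indep2 X a1 a2 -> indep2 X b1 b2 ->
  exists f1 f2, biorth a1 a2 f1 f2 /\ f1 b1 * f2 b2 - f1 b2 * f2 b1 <> RtoC 0.
Proof.
  intros Ha Hb. destruct (dual2 X _ _ Ha) as [f1 [f2 [Hf1 [Hf2 [E11 [E12 [E21 E22]]]]]]].
  assert (Bo : biorth a1 a2 f1 f2) by (apply biorth_intro; auto).
  destruct (classic (f1 b1 * f2 b2 - f1 b2 * f2 b1 = RtoC 0)) as [D|D]; [|exists f1, f2; auto].
  destruct (classic (f1 b1 = RtoC 0 /\ f1 b2 = RtoC 0 /\ f2 b1 = RtoC 0 /\ f2 b2 = RtoC 0)) as [[Z1 [Z2 [Z3 Z4]]]|NZ].
  -
    destruct (ext1 X a1 a2 b1 f1 f2 Hf1 Hf2 E11 E12 E21 E22) as [g [Hg [Ga1 [Ga2 Gb]]]].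
    { rewrite Z1, Z3, vscal_0, vscal_0, vadd_zero, vopp_scal, vscal_zero, vadd_zero. exact (indep_nz1 X b1 b2 Hb). }
    assert (Bo' : biorth a1 a2 (fun x => f1 x + g x) f2).
    { apply biorth_intro; auto; [apply func_add; auto| simpl; rewrite E11, Ga1; ring | simpl; rewrite E12, Ga2; ring]. }
    destruct (classic ((f1 b1 + g b1) * f2 b2 - (f1 b2 + g b2) * f2 b1 = RtoC 0)) as [D'|D'].
    + apply (improve_rk1 a1 a2 b1 b2 _ _ Bo' Hb D').
      simpl. rewrite Z1, Gb. intros [E _]. apply C1_neq0. rewrite <- E. ring.
    + exists (fun x => f1 x + g x), f2. auto.
  - apply (improve_rk1 a1 a2 b1 b2 f1 f2 Bo Hb D NZ).
Qed.

Lemma choose_c (m11 m12 m21 m22 : C) : m11 * m22 - m12 * m21 <> RtoC 0 ->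
  exists c, m11 + c * m12 <> RtoC 0 /\ m22 - c * m12 <> RtoC 0.
Proof.
  intros D. apply NNPP. intros N.
  assert (H : forall c, m11 + c * m12 = RtoC 0 \/ m22 - c * m12 = RtoC 0).
  { intros c. apply NNPP. intros N2. apply N. exists c. split; intros E; apply N2; auto. }
  destruct (Ceq_dec m12 (RtoC 0)) as [Z|Z].
  - destruct (H (RtoC 0)) as [E|E]; apply D; rewrite Z in *;
      [replace m11 with (m11 + RtoC 0 * RtoC 0) by ring; rewrite E; ring
      |replace m22 with (m22 - RtoC 0 * RtoC 0) by ring; rewrite E; ring].
  - apply Z.
    assert (K1 : forall c c', c <> c' -> m11 + c * m12 = RtoC 0 -> m11 + c' * m12 = RtoC 0 -> m12 = RtoC 0).
    { intros c c' Hc E1 E2. replace m12 with (((m11 + c * m12) - (m11 + c' * m12)) / (c - c')).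
      - rewrite E1, E2. field. intros E. apply Hc. replace c with ((c - c') + c') by ring. rewrite E. ring.
      - field. intros E. apply Hc. replace c with ((c - c') + c') by ring. rewrite E. ring. }
    assert (K2 : forall c c', c <> c' -> m22 - c * m12 = RtoC 0 -> m22 - c' * m12 = RtoC 0 -> m12 = RtoC 0).
    { intros c c' Hc E1 E2. replace m12 with (((m22 - c' * m12) - (m22 - c * m12)) / (c - c')).
      - rewrite E1, E2. field. intros E. apply Hc. replace c with ((c - c') + c') by ring. rewrite E. ring.
      - field. intros E. apply Hc. replace c with ((c - c') + c') by ring. rewrite E. ring. }
    assert (N01 : RtoC 0 <> RtoC 1) by (apply Cneq; lra).
    assert (N02 : RtoC 0 <> RtoC 2) by (apply Cneq; lra).
    assert (N12 : RtoC 1 <> RtoC 2) by (apply Cneq; lra).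
    destruct (H (RtoC 0)) as [A0|A0]; destruct (H (RtoC 1)) as [A1|A1]; destruct (H (RtoC 2)) as [A2|A2];
      first [exact (K1 _ _ N01 A0 A1) | exact (K1 _ _ N02 A0 A2) | exact (K1 _ _ N12 A1 A2)
            | exact (K2 _ _ N01 A0 A1) | exact (K2 _ _ N02 A0 A2) | exact (K2 _ _ N12 A1 A2)].
Qed.

End VA.

Open Scope C_scope.

Section LR.
Variable X : CBanach.

Lemma normalize (T : op X) a1 a2 f1 f2 : in_BX T -> biorth X a1 a2 f1 f2 ->
  f1 (T a1) * f2 (T a2) - f1 (T a2) * f2 (T a1) <> RtoC 0 ->
  exists a1' a2' g1 g2, biorth X a1' a2' g1 g2 /\
    g1 (T a1') * g2 (T a2') - g1 (T a2') * g2 (T a1') <> RtoC 0 /\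
    g1 (T a1') <> RtoC 0 /\ g2 (T a2') <> RtoC 0.
Proof.
  intros HT [Hf1 [Hf2 [E11 [E12 [E21 E22]]]]] D.
  destruct (choose_c _ _ _ _ D) as [c [C1 C2]].
  destruct (BX_lin X T HT) as [Ta Ts].
  exists (vadd a1 (vscal c a2)), a2, f1, (fun x => f2 x + (- c) * f1 x).
  assert (Ea : T (vadd a1 (vscal c a2)) = vadd (vscal (RtoC 1) (T a1)) (vscal c (T a2))).
  { rewrite Ta, Ts, vscal_one'. reflexivity. }
  split; [|split; [|split]].
  - apply biorth_intro.
    + exact Hf1.
    + apply func_add; [auto| apply func_scal; auto].
    + rewrite <- (vscal_one' X a1), func_lc by auto. rewrite E11, E12. ring.
    + exact E12.
    + simpl. rewrite <- (vscal_one' X a1), !func_lc by auto. rewrite E11, E12, E21, E22. ring.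
    + simpl. rewrite E12, E22. ring.
  - simpl. rewrite Ea, !func_lc by auto. intros E. apply D. rewrite <- E. ring.
  - rewrite Ea, func_lc by auto. intros E. apply C1. rewrite <- E. ring.
  - simpl. intros E. apply C2. rewrite <- E. ring.
Qed.

Lemma LR (T : op X) r s : (1 <= r + s)%nat -> in_BX T -> ~ rank_le T 1 ->
  exists S, in_BX S /\ rank_le S 2 /\ exists m, m <> RtoC 0 /\
    periph_spectrum (sandwich r s S T) m /\ periph_spectrum (sandwich r s S T) (- m).
Proof.
  intros Hrs HT Hn. destruct (BX_lin X T HT) as [Ta Ts].
  destruct (not_rank1 X T HT Hn) as [u1 [u2 Hi]].
  assert (Hu : indep2 X u1 u2).
  { intros a b E. apply Hi. rewrite <- Ts, <- Ts, <- Ta, E. apply lin_zero. split; auto. }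
  destruct (adjust X u1 u2 (T u1) (T u2) Hu Hi) as [f1 [f2 [Bo D]]].
  destruct (normalize T u1 u2 f1 f2 HT Bo D) as [a1 [a2 [g1 [g2 [[Hg1 [Hg2 [E11 [E12 [E21 E22]]]]] [D' [N1 N2]]]]]]].
  set (m11 := g1 (T a1)) in *. set (m12 := g1 (T a2)) in *. set (m21 := g2 (T a1)) in *. set (m22 := g2 (T a2)) in *.
  set (t2 := - m11 / m22).
  destruct (croot (r + s) t2 Hrs) as [k Hk].
  set (S := op_add (r1 X g1 a1) (r1 X (fun x => k * g2 x) a2)).
  assert (HS : in_BX S) by (apply BX_add; apply BX_r1; [auto| apply func_scal; auto]).
  assert (Spow : forall j x, (1 <= j)%nat -> op_pow S j x = vadd (vscal (g1 x) a1) (vscal (Cpow k j * g2 x) a2)).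
  { intros j x Hj. induction j as [|j IH]; [lia|]. destruct j as [|j].
    - unfold op_pow. simpl. unfold S, op_add, r1. f_equal. f_equal. ring.
    - change (S (op_pow S (Datatypes.S j) x) = vadd (vscal (g1 x) a1) (vscal (Cpow k (Datatypes.S (Datatypes.S j)) * g2 x) a2)).
      rewrite IH by lia. unfold S, op_add, r1. rewrite !func_lc by auto.
      rewrite E11, E12, E21, E22. simpl Cpow. f_equal; f_equal; ring. }
  exists S. split; [exact HS|]. split.
  - apply (rank2_form X S a1 a2 g1 (fun x => k * g2 x)). intros x. reflexivity.
  - set (q := m11 * m11 + m12 * (t2 * m21)).
    assert (Hq : q <> RtoC 0).
    { unfold q, t2. intros E. apply D'.
      assert (E2 : m11 * ((m11 * m22 - m12 * m21) / m22) = RtoC 0) by (rewrite <- E; field; auto).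
      apply Cmult_integral in E2. destruct E2 as [E2|E2]; [contradiction|].
      replace (m11 * m22 - m12 * m21) with (((m11 * m22 - m12 * m21) / m22) * m22) by (field; auto).
      rewrite E2. ring. }
    assert (H2 : (1 <= 2)%nat) by lia.
    destruct (croot 2 q H2) as [m Hm]. simpl in Hm.
    assert (Hm' : m * m = q) by (rewrite <- Hm; ring).
    assert (Hm0 : m <> RtoC 0) by (intros E; apply Hq; rewrite <- Hm', E; ring).
    exists m. split; [exact Hm0|].
    assert (Hb : indep2 X (T a1) (T a2)).
    { intros a b E.
      assert (F1 : a * m11 + b * m12 = RtoC 0).
      { transitivity (g1 (vadd (vscal a (T a1)) (vscal b (T a2)))); [symmetry; apply func_lc; auto|].
        rewrite E. apply func_zero; auto. }
      assert (F2 : a * m21 + b * m22 = RtoC 0).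
      { transitivity (g2 (vadd (vscal a (T a1)) (vscal b (T a2)))); [symmetry; apply func_lc; auto|].
        rewrite E. apply func_zero; auto. }
      split.
      - apply NNPP. intros Na. apply D'. 
        replace (m11 * m22 - m12 * m21) with (/ a * (m22 * (a * m11 + b * m12) - m12 * (a * m21 + b * m22))) by (field; auto).
        rewrite F1, F2. ring.
      - apply NNPP. intros Nb. apply D'.
        replace (m11 * m22 - m12 * m21) with (/ b * (m11 * (a * m21 + b * m22) - m21 * (a * m11 + b * m12))) by (field; auto).
        rewrite F1, F2. ring. }
    apply (two_point X S T r s (T a1) (T a2) m11 m12 (t2 * m21) m); auto.
    + intros x. rewrite Spow by exact Hrs. rewrite Hk, Ta, !Ts.
      exists (g1 x), (t2 * g2 x). reflexivity.
    + rewrite Spow by exact Hrs. rewrite Hk, Ta, !Ts. fold m11 m21. reflexivity.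
    + rewrite Spow by exact Hrs. rewrite Hk, Ta, !Ts. fold m12 m22.
      f_equal; f_equal. unfold t2. field. auto.
Qed.

End LR.

Open Scope C_scope.

Section Aux.
Variable X : CBanach.

Lemma triv_nospec (T : op X) z : (forall x : X, x = vzero) -> ~ spectrum X T z.
Proof.
  intros H Hs. apply Hs. exists op_zero. split; [apply BX_zero|]. split.
  - intros x. rewrite (H x). reflexivity.
  - intros x. rewrite (H x). apply H.
Qed.

Lemma per_zero : (exists x : X, x <> vzero) -> forall z, periph_spectrum (@op_zero X) z <-> z = RtoC 0.
Proof.
  intros Hnt. apply per_exact.
  - intros z Hz. apply (G1_spec X op_zero (RtoC 0) z (BX_zero X)); auto.
    intros x. unfold op_zero. rewrite vscal_zero. reflexivity.
  - intros E; contradiction.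
  - intros _. apply nilp_spec0; [exact Hnt| apply BX_zero| intros x; reflexivity].
Qed.

Lemma sandwich_zero (B : op X) r s : in_BX B -> sandwich r s B op_zero = op_zero.
Proof.
  intros HB. apply functional_extensionality. intros x. unfold sandwich, op_comp, op_zero.
  apply lin_zero. apply BX_lin, BX_pow; auto.
Qed.

Lemma mneg (m : C) : m = - m -> m = RtoC 0.
Proof.
  intros E. assert (E2 : RtoC 2 * m = RtoC 0) by (replace (RtoC 2 * m) with (m - - m) by (apply C_ext; simpl; ring); rewrite <- E; ring).
  apply Cmult_integral in E2. destruct E2 as [E2|E2]; [|exact E2].
  exfalso. apply (Cneq 2 0); [lra| exact E2].
Qed.

Lemma std_fin (A : op X -> Prop) T k : standard_op_alg A -> in_BX T -> rank_le T k -> A T.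
Proof. intros [_ [H _]] HT Hk. apply H; auto. exists k. exact Hk. Qed.

Lemma std_bx (A : op X -> Prop) T : standard_op_alg A -> A T -> in_BX T.
Proof. intros [H _] HT. apply H; auto. Qed.

Lemma rank1_le2 (T : op X) : rank_le T 1 -> rank_le T 2.
Proof.
  intros H. destruct (rank1_form X T H) as [v Hv].
  apply (rank2_form X T v v (fun x => proj1_sig (constructive_indefinite_description _ (Hv x))) (fun _ => RtoC 0)).
  intros x. destruct (constructive_indefinite_description _ (Hv x)) as [c Ec]. simpl.
  rewrite Ec, vscal_0, vadd_zero. reflexivity.
Qed.

Lemma Sep_ex (T : op X) : is_linear X T -> T <> op_zero ->
  exists y g, is_func X g /\ g y = RtoC 1 /\ g (T y) <> RtoC 0.
Proof.
  intros HT Hn. apply NNPP. intros N. apply Hn. apply functional_extensionality.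
  apply (Sep X T HT). intros y g Hg Hgy. apply NNPP. intros E. apply N. exists y, g. auto.
Qed.

Lemma per_rank1_unique (R : op X) z z' : in_BX R -> rank_le R 1 ->
  periph_spectrum R z -> periph_spectrum R z' -> z = z'.
Proof.
  intros HR Hr H1 H2. destruct (rank1_sq X R HR Hr) as [l Hl].
  exact (per_G1_unique X R l z z' HR Hl H1 H2).
Qed.

End Aux.

Lemma zero_rank (X : CBanach) k : rank_le (@op_zero X) k.
Proof.
  exists (fun _ => vzero). intros x. exists (fun _ => RtoC 0). unfold op_zero.
  induction k as [|k IH]; simpl; [reflexivity|]. rewrite <- IH, vscal_zero, vadd_zero. reflexivity.
Qed.

Ltac cring := match goal with |- @eq _ ?x ?y => change (@eq Complex.C x y) end; ring.

Theorem mainTheorem4 (X1 X2 : CBanach) (A1 : op X1 -> Prop) (A2 : op X2 -> Prop)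
  (r s : nat) (Phi : op X1 -> op X2)
  (hA1 : standard_op_alg A1) (hA2 : standard_op_alg A2)
  (hrs : (1 <= r + s)%nat)
  (hmaps : forall A, A1 A -> A2 (Phi A))
  (hsurj2 : forall T, in_BX T -> rank_le T 2 -> exists A, A1 A /\ Phi A = T)
  (hpres : forall A B, A1 A -> A1 B -> forall z,
     periph_spectrum (sandwich r s B A) z <->
     periph_spectrum (sandwich r s (Phi B) (Phi A)) z) :
  (forall A, A1 A -> (Phi A = op_zero <-> A = op_zero)) /\
  (forall a b A B, A1 A -> A1 B ->
     Phi (op_add (op_scal a A) (op_scal b B)) =
     op_add (op_scal a (Phi A)) (op_scal b (Phi B))) /\
  (forall A B, A1 A -> A1 B -> Phi A = Phi B -> A = B) /\
  (forall A, A1 A -> (rank_one A <-> rank_one (Phi A))).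
Proof.
  Open Scope C_scope.
  assert (Hbx1 : forall A, A1 A -> in_BX A) by (intros; eapply std_bx; eauto).
  assert (Hbx2 : forall A, A1 A -> in_BX (Phi A)) by (intros; eapply std_bx; eauto).
  assert (Z1 : A1 op_zero).
  { apply (std_fin X1 A1 op_zero 0 hA1 (BX_zero X1)). apply zero_rank. }
  destruct (classic (exists x : X1, x <> vzero)) as [Nt1|T1].
  2:{
    assert (Tr : forall x : X1, x = vzero) by (intros x; apply NNPP; intros N; apply T1; exists x; exact N).
    assert (Allz : forall A : op X1, A = op_zero) by (intros A; apply functional_extensionality; intros x; rewrite (Tr (A x)); reflexivity).
    destruct (hsurj2 op_zero (BX_zero X2)) as [A0 [_ E0]].
    { apply zero_rank. }
    assert (PZ : forall A, Phi A = op_zero) by (intros A; rewrite (Allz A), <- (Allz A0); exact E0).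
    split; [|split; [|split]].
    - intros A _. split; intros _; [apply Allz| apply PZ].
    - intros. rewrite !PZ. apply functional_extensionality. intros x. unfold op_add, op_scal, op_zero.
      rewrite !vscal_zero, vadd_zero. reflexivity.
    - intros A B _ _ _. rewrite (Allz A), (Allz B). reflexivity.
    - intros A _. unfold rank_one. rewrite (PZ A), (Allz A). tauto. }
  destruct Nt1 as [x1 Hx1].
  destruct (HB1 X1 x1 Hx1) as [g1 [Hg1 Eg1]].
  assert (Nt1 : exists x : X1, x <> vzero) by (exists x1; exact Hx1).
  assert (Nt2 : exists x : X2, x <> vzero).
  { apply NNPP. intros T2.
    assert (Tr : forall x : X2, x = vzero) by (intros x; apply NNPP; intros N; apply T2; exists x; exact N).
    set (P := r1 X1 g1 x1).
    assert (HP : in_BX P) by (apply BX_r1; auto).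
    assert (AP : A1 P) by (apply (std_fin X1 A1 P 2 hA1 HP); apply rank1_le2; apply (rank1_of_form X1 P x1); intros x; exists (g1 x); reflexivity).
    assert (H1 : periph_spectrum (sandwich r s P P) (g1 (P x1))) by (apply (Klemma X1 P g1 x1 r s Nt1 hrs HP Hg1 Eg1); reflexivity).
    apply (proj1 (hpres P P AP AP _)) in H1. destruct H1 as [H1 _].
    exact (triv_nospec X2 _ _ Tr H1). }
  (* idempotents in X2 *)
  assert (Qpre : forall y g, is_func X2 g -> g y = RtoC 1 ->
     exists B, A1 B /\ forall A, A1 A -> forall z, periph_spectrum (sandwich r s B A) z <-> z = g (Phi A y)).
  { intros y g Hg Hgy.
    assert (HQ : in_BX (r1 X2 g y)) by (apply BX_r1; auto).
    destruct (hsurj2 (r1 X2 g y) HQ) as [B [AB EB]].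
    { apply rank1_le2. apply (rank1_of_form X2 _ y). intros x. exists (g x). reflexivity. }
    exists B. split; [exact AB|]. intros A AA z. rewrite (hpres A B AA AB z), EB.
    apply Klemma; auto. }
  assert (P0 : Phi op_zero = op_zero).
  { apply functional_extensionality. apply (Sep X2 (Phi op_zero)); [apply BX_lin; auto|].
    intros y g Hg Hgy. destruct (Qpre y g Hg Hgy) as [B [AB HB]].
    symmetry. apply (HB op_zero Z1). rewrite sandwich_zero by auto. apply per_zero; auto. }
  assert (S1 : forall A, A1 A -> Phi A = op_zero -> A = op_zero).
  { intros A AA E. apply NNPP. intros Hn.
    destruct (Sep_ex X1 A (BX_lin X1 A (Hbx1 A AA)) Hn) as [y [g [Hg [Hgy Hne]]]].
    set (P := r1 X1 g y).
    assert (HP : in_BX P) by (apply BX_r1; auto).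
    assert (AP : A1 P) by (apply (std_fin X1 A1 P 2 hA1 HP); apply rank1_le2; apply (rank1_of_form X1 P y); intros x; exists (g x); reflexivity).
    assert (H1 : periph_spectrum (sandwich r s P A) (g (A y))) by (apply (Klemma X1 A g y r s Nt1 hrs (Hbx1 A AA) Hg Hgy); reflexivity).
    apply (proj1 (hpres A P AA AP _)) in H1. rewrite E, sandwich_zero in H1 by auto.
    apply (per_zero X2 Nt2) in H1. contradiction. }
  assert (S2 : forall y g, is_func X2 g -> g y = RtoC 1 ->
     forall a b A A', A1 A -> A1 A' ->
     g (Phi (op_add (op_scal a A) (op_scal b A')) y) = a * g (Phi A y) + b * g (Phi A' y)).
  { intros y g Hg Hgy a b A A' AA AA'.
    destruct (Qpre y g Hg Hgy) as [B [AB HB]].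
    assert (HBB : in_BX B) by auto.
    set (Bn := op_pow B (r + s)).
    assert (HBn : in_BX Bn) by (apply BX_pow; auto).
    destruct (BX_lin X2 _ (Hbx2 _ AA)) as [_ _].
    assert (Pmu : forall C, A1 C -> periph_spectrum (sandwich r s B C) (g (Phi C y))).
    { intros C AC. apply (HB C AC). reflexivity. }
    destruct (classic (rank_le Bn 1)) as [Hr|Hr].
    2:{ exfalso. destruct (VA X1 B r s HBB Hr) as [A0 [HA0 [HA0r [m [Hm0 [Pm Pm']]]]]].
        assert (AA0 : A1 A0) by (apply (std_fin X1 A1 A0 2 hA1 HA0 HA0r)).
        apply (HB A0 AA0) in Pm. apply (HB A0 AA0) in Pm'. apply Hm0, mneg. rewrite Pm at 1. rewrite Pm'. ring. }
    destruct (rank1_form X1 Bn Hr) as [v Hv].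
    destruct (BX_lin X1 Bn HBn) as [Bna Bns].
    destruct (classic (v = vzero)) as [Ev|Ev].
    - assert (Z : forall C, A1 C -> g (Phi C y) = RtoC 0).
      { intros C AC. pose proof (Pmu C AC) as Pm. set (mu := g (Phi C y)) in *.
        destruct (Ceq_dec mu (RtoC 0)) as [E|E]; [exact E|].
        apply proj1 in Pm. apply (sandwich_jac X1 B C r s mu HBB (Hbx1 C AC) E) in Pm.
        assert (EZ : op_comp C (op_pow B (r + s)) = op_zero).
        { apply functional_extensionality. intros x. unfold op_comp, op_zero. change (op_pow B (r + s)) with Bn.
          destruct (Hv x) as [c Ec]. rewrite Ec, Ev, vscal_zero. apply lin_zero, BX_lin; auto. }
        rewrite EZ in Pm. destruct (G1_spec X1 op_zero (RtoC 0) mu (BX_zero X1)) as [E2|E2]; auto.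
        intros x. unfold op_zero. rewrite vscal_zero. reflexivity. }
      destruct hA1 as [_ [_ [Hadd [Hsc _]]]].
      rewrite !Z by auto. ring.
    - assert (Hl : forall C, A1 C -> forall l, Bn (C v) = vscal l v -> g (Phi C y) = l).
      { intros C AC l El. pose proof (Pmu C AC) as Pm. set (mu := g (Phi C y)) in *.
        destruct (BX_lin X1 C (Hbx1 C AC)) as [Ca Cs].
        set (N := op_comp C (op_pow B (r + s))).
        assert (HN : in_BX N) by (apply BX_comp; auto).
        assert (NN : forall x, N (N x) = vscal l (N x)).
        { intros x. unfold N, op_comp; cbv beta. change (op_pow B (r + s)) with Bn. destruct (Hv x) as [c Ec]. rewrite Ec, !Cs, Bns, El, !Cs, !vscal_assoc'.
          f_equal. apply C_ext; simpl; ring. }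
        destruct (Ceq_dec mu (RtoC 0)) as [E|E].
        + destruct (Ceq_dec l (RtoC 0)) as [El0|El0]; [rewrite E, El0; reflexivity|].
          exfalso. apply El0.
          assert (Cv : C v <> vzero).
          { intros E2. rewrite E2, (lin_zero X1 Bn) in El by (split; auto). apply Ev. symmetry in El.
            exact (vscal_inj X1 l v El El0). }
          assert (Sl : spectrum X1 N l).
          { apply (eig_spec X1 N l (C v)); [apply BX_lin; exact HN| exact Cv|]. unfold N, op_comp; cbv beta. change (op_pow B (r + s)) with Bn. rewrite El, Cs. reflexivity. }
          apply (sandwich_jac X1 B C r s l HBB (Hbx1 C AC) El0) in Sl.
          pose proof (per_ge X1 _ _ _ Pm Sl) as Hle. rewrite E in Hle. change (Cmod l <= Cmod (RtoC 0))%R in Hle.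
          rewrite Cmod_0 in Hle. apply Cmod_eq_0'. pose proof (Cmod_ge_0 l). lra.
        + apply proj1 in Pm. apply (sandwich_jac X1 B C r s mu HBB (Hbx1 C AC) E) in Pm.
          destruct (G1_spec X1 N l mu HN NN Pm) as [E2|E2]; [contradiction| exact E2]. }
      destruct hA1 as [_ [_ [Hadd [Hsc _]]]].
      assert (AC : A1 (op_add (op_scal a A) (op_scal b A'))) by (apply Hadd; apply Hsc; auto).
      destruct (Hv (A v)) as [lA ElA]. destruct (Hv (A' v)) as [lA' ElA'].
      destruct (Hv (op_add (op_scal a A) (op_scal b A') v)) as [lC ElC].
      rewrite (Hl A AA lA ElA), (Hl A' AA' lA' ElA'), (Hl _ AC lC ElC).
      unfold op_add, op_scal in ElC. rewrite Bna, !Bns, ElA, ElA' in ElC.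
      apply NNPP. intros Ne.
      assert (E3 : vscal (lC - (a * lA + b * lA')) v = vzero).
      { transitivity (vadd (vscal lC v) (vopp (vadd (vscal a (vscal lA v)) (vscal b (vscal lA' v))))); [vring|].
        rewrite <- ElC. apply vadd_opp. }
      apply Ev. apply (vscal_inj X1 _ v E3). intros E4. apply Ne.
      replace lC with ((lC - (a * lA + b * lA')) + (a * lA + b * lA')) by ring. rewrite E4. ring. }
  assert (Lin : forall a b A B, A1 A -> A1 B ->
     Phi (op_add (op_scal a A) (op_scal b B)) = op_add (op_scal a (Phi A)) (op_scal b (Phi B))).
  { intros a b A B AA AB. destruct hA1 as [_ [_ [Hadd [Hsc _]]]].
    assert (AC : A1 (op_add (op_scal a A) (op_scal b B))) by (apply Hadd; apply Hsc; auto).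
    set (D := fun y => vadd (Phi (op_add (op_scal a A) (op_scal b B)) y)
                             (vopp (op_add (op_scal a (Phi A)) (op_scal b (Phi B)) y))).
    assert (HD : in_BX D).
    { unfold D. apply (BX_add X2 _ (fun y => vopp _)); [auto|].
      replace (fun y => vopp (op_add (op_scal a (Phi A)) (op_scal b (Phi B)) y))
        with (op_scal (RtoC (-1)) (op_add (op_scal a (Phi A)) (op_scal b (Phi B)))).
      - apply BX_scal, BX_add; apply BX_scal; auto.
      - apply functional_extensionality; intros y. unfold op_scal. rewrite vopp_scal. reflexivity. }
    assert (ZD : forall y, D y = vzero).
    { apply (Sep X2 D (BX_lin X2 D HD)). intros y g Hg Hgy. unfold D.
      pose proof (S2 y g Hg Hgy a b A B AA AB) as E2.
      change (op_add (op_scal a (Phi A)) (op_scal b (Phi B)) y) with (vadd (vscal a (Phi A y)) (vscal b (Phi B y))).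
      pose proof (func_opp X2 g) as Ho. destruct Hg as [ga [gs gb]].
      rewrite ga, Ho by (split; auto). rewrite ga, !gs, E2. ring. }
    apply functional_extensionality. intros y. specialize (ZD y). unfold D in ZD.
    apply (vadd_cancel X2 (vopp (op_add (op_scal a (Phi A)) (op_scal b (Phi B)) y))).
    rewrite vadd_comm, ZD, vadd_comm, vadd_opp. reflexivity. }
  split; [|split; [|split]].
  - intros A AA. split; [apply S1; auto| intros ->; exact P0].
  - exact Lin.
  - intros A B AA AB E. destruct hA1 as [_ [_ [Hadd [Hsc _]]]].
    assert (AC : A1 (op_add (op_scal (RtoC 1) A) (op_scal (RtoC (-1)) B))) by (apply Hadd; apply Hsc; auto).
    pose proof (Lin (RtoC 1) (RtoC (-1)) A B AA AB) as L. rewrite E in L.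
    assert (L2 : Phi (op_add (op_scal (RtoC 1) A) (op_scal (RtoC (-1)) B)) = op_zero).
    { rewrite L. apply functional_extensionality. intros y. unfold op_add, op_scal, op_zero. vring. }
    apply S1 in L2; [|exact AC].
    apply functional_extensionality. intros y.
    assert (E2 := f_equal (fun f => f y) L2). simpl in E2. unfold op_add, op_scal, op_zero in E2.
    transitivity (vadd (vadd (vscal (RtoC 1) (A y)) (vscal (RtoC (-1)) (B y))) (B y)); [vring|].
    rewrite E2, vadd_zero_l. reflexivity.
  - intros A AA. unfold rank_one. split.
    + intros [Hr Hn]. split.
      * apply NNPP. intros Hn2.
        destruct (LR X2 (Phi A) r s hrs (Hbx2 A AA) Hn2) as [S [HS [HS2 [m [Hm0 [Pm Pm']]]]]].
        destruct (hsurj2 S HS HS2) as [B [AB EB]]. subst S.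
        apply (proj2 (hpres A B AA AB _)) in Pm. apply (proj2 (hpres A B AA AB _)) in Pm'.
        assert (HR : in_BX (sandwich r s B A)).
        { unfold sandwich. apply BX_comp; [apply BX_pow; auto| apply BX_comp; [auto| apply BX_pow; auto]]. }
        pose proof (per_rank1_unique X1 _ _ _ HR (sandwich_rank1 X1 B A r s (Hbx1 B AB) Hr) Pm Pm').
        apply Hm0. apply mneg. exact H.
      * intros E. apply Hn. apply S1; auto.
    + intros [Hr Hn]. split.
      * apply NNPP. intros Hn2.
        destruct (LR X1 A r s hrs (Hbx1 A AA) Hn2) as [S [HS [HS2 [m [Hm0 [Pm Pm']]]]]].
        assert (AS : A1 S) by (apply (std_fin X1 A1 S 2 hA1 HS HS2)).
        apply (proj1 (hpres A S AA AS _)) in Pm. apply (proj1 (hpres A S AA AS _)) in Pm'.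
        assert (HR : in_BX (sandwich r s (Phi S) (Phi A))).
        { unfold sandwich. apply BX_comp; [apply BX_pow; auto| apply BX_comp; [auto| apply BX_pow; auto]]. }
        pose proof (per_rank1_unique X2 _ _ _ HR (sandwich_rank1 X2 (Phi S) (Phi A) r s (Hbx2 S AS) Hr) Pm Pm').
        apply Hm0. apply mneg. exact H.
      * intros E. apply Hn. rewrite E. exact P0.
Qed.
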